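(* Let $x_1,\ldots,x_n,y_1,\ldots,y_p$ be self-adjoint elements of a unital C$^*$-algebra $\mathcal A$ such that $y_1,\ldots,y_p$ belong to the C$^*$-subalgebra of $\mathcal A$ generated by $x_1,\ldots,x_n$. Then for every $\omega>0$, $$\mathfrak K_{top}^{(2)}(x_1,\ldots,x_n;4\omega)\le\mathfrak K_{top}^{(2)}(x_1,\ldots,x_n:y_1,\ldots,y_p;2\omega)\le\mathfrak K_{top}^{(2)}(x_1,\ldots,x_n;\omega).$$
   Context: Microstates. Let $\mathcal A$ be a unital C$^*$-algebra and $x_1,\dots,x_n,y_1,\dots,y_m$ self-adjoint elements of $\mathcal A$. Let $\{P_r\}_{r\ge1}$ enumerate all noncommutative polynomials in the indeterminates $X_1,\dots,X_n,Y_1,\dots,Y_m$ whose coefficients have rational real and imaginary parts (constants allowed). $\mathcal M_k^{s.a.}(\mathbb C)$ is the set of self-adjoint $k\times k$ complex matrices and $\tau_k=\frac1k\mathrm{Tr}$. For $R,\epsilon>0$ and $r,k\in\mathbb N$, $\Gamma_R^{(top)}(x_1,\dots,x_n:y_1,\dots,y_m;k,\epsilon,P_1,\dots,P_r)$ is the set of $(A_1,\dots,A_n)\in\mathcal M_k^{s.a.}(\mathbb C)^n$ for which there exist $B_1,\dots,B_m\in\mathcal M_k^{s.a.}(\mathbb C)$ with $\max_{i,j}\{\|A_i\|,\|B_j\|\}\le R$ and $\big|\|P_j(A_1,\dots,A_n,B_1,\dots,B_m)\|-\|P_j(x_1,\dots,x_n,y_1,\dots,y_m)\|\big|\le\epsilon$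 for $1\le j\le r$. When $m=0$ it is written $\Gamma_R^{(top)}(x_1,\dots,x_n;k,\epsilon,P_1,\dots,P_r)$. Covering numbers. On $\mathcal M_k(\mathbb C)^n$ put $\|(A_i)\|_2=(\sum_i\tau_k(A_i^*A_i))^{1/2}$. The $\omega$-orbit ball centred at $(B_i)$ is the set of $(A_i)$ such that some unitary $W\in\mathcal M_k(\mathbb C)$ satisfies $\|(A_i)-(WB_iW^* )\|_2<\omega$; for $\Sigma\subseteq\mathcal M_k(\mathbb C)^n$, $o_2(\Sigma,\omega)$ is the minimal number of $\omega$-orbit balls centred at points of $\Sigma$ covering $\Sigma$. Convention $\log 0=-\infty$. Topological orbit dimension: $\mathfrak K^{(2)}_{top}(x:y;\omega)=\sup_{R>0}\inf_{\epsilon>0,r\in\mathbb N}\limsup_{k\to\infty}\frac{\log o_2(\Gamma_R^{(top)}(x:y;k,\epsilon,P_1,\dots,P_r),\omega)}{k^2}$; when $m=0$ the ''$:y$'' part is omitted. *)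

(* Defs.v *)
From Stdlib Require Import Reals QArith Qreals ClassicalEpsilon.
From mathcomp Require Import ssreflect ssrfun ssrbool eqtype ssrnat seq fintype bigop.

Set Implicit Arguments.
Unset Strict Implicit.
Unset Printing Implicit Defensive.

Local Open Scope R_scope.

Record C := mkC { Cre : R; Cim : R }.
Definition C0 : C := mkC 0 0.
Definition C1 : C := mkC 1 0.
Definition Cadd (z w : C) : C := mkC (Cre z + Cre w) (Cim z + Cim w).
Definition Copp (z : C) : C := mkC (- Cre z) (- Cim z).
Definition Cmul (z w : C) : C :=
  mkC (Cre z * Cre w - Cim z * Cim w) (Cre z * Cim w + Cim z * Cre w).
Definition Cconj (z : C) : C := mkC (Cre z) (- Cim z).
Definition Cabs (z : C) : R := sqrt (Rsqr (Cre z) + Rsqr (Cim z)).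
Definition CofR (r : R) : C := mkC r 0.
Definition CofQ (a b : Q) : C := mkC (Q2R a) (Q2R b).

Record CstarAlg := {
  ca_car :> Type;
  ca_zero : ca_car;
  ca_one : ca_car;
  ca_add : ca_car -> ca_car -> ca_car;
  ca_opp : ca_car -> ca_car;
  ca_mul : ca_car -> ca_car -> ca_car;
  ca_smul : C -> ca_car -> ca_car;
  ca_star : ca_car -> ca_car;
  ca_norm : ca_car -> R;
  ca_addA : forall x y z, ca_add x (ca_add y z) = ca_add (ca_add x y) z;
  ca_addC : forall x y, ca_add x y = ca_add y x;
  ca_add0 : forall x, ca_add ca_zero x = x;
  ca_addN : forall x, ca_add x (ca_opp x) = ca_zero;
  ca_smul1 : forall x, ca_smul C1 x = x;
  ca_smulA : forall a b x, ca_smul a (ca_smul b x) = ca_smul (Cmul a b) x;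
  ca_smulDr : forall a x y, ca_smul a (ca_add x y) = ca_add (ca_smul a x) (ca_smul a y);
  ca_smulDl : forall a b x, ca_smul (Cadd a b) x = ca_add (ca_smul a x) (ca_smul b x);
  ca_mulA : forall x y z, ca_mul x (ca_mul y z) = ca_mul (ca_mul x y) z;
  ca_mul1l : forall x, ca_mul ca_one x = x;
  ca_mul1r : forall x, ca_mul x ca_one = x;
  ca_mulDl : forall x y z, ca_mul (ca_add x y) z = ca_add (ca_mul x z) (ca_mul y z);
  ca_mulDr : forall x y z, ca_mul x (ca_add y z) = ca_add (ca_mul x y) (ca_mul x z);
  ca_smul_mull : forall a x y, ca_mul (ca_smul a x) y = ca_smul a (ca_mul x y);
  ca_smul_mulr : forall a x y, ca_mul x (ca_smul a y) = ca_smul a (ca_mul x y);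
  ca_starD : forall x y, ca_star (ca_add x y) = ca_add (ca_star x) (ca_star y);
  ca_starZ : forall a x, ca_star (ca_smul a x) = ca_smul (Cconj a) (ca_star x);
  ca_starM : forall x y, ca_star (ca_mul x y) = ca_mul (ca_star y) (ca_star x);
  ca_starK : forall x, ca_star (ca_star x) = x;
  ca_norm_eq0 : forall x, ca_norm x = 0 -> x = ca_zero;
  ca_normD : forall x y, ca_norm (ca_add x y) <= ca_norm x + ca_norm y;
  ca_normZ : forall a x, ca_norm (ca_smul a x) = Cabs a * ca_norm x;
  ca_normM : forall x y, ca_norm (ca_mul x y) <= ca_norm x * ca_norm y;
  ca_cstar : forall x, ca_norm (ca_mul (ca_star x) x) = ca_norm x * ca_norm x;
  ca_complete : forall u : nat -> ca_car,
    (forall e, 0 < e -> exists N, forall p q, (N <= p)%N -> (N <= q)%N ->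
        ca_norm (ca_add (u p) (ca_opp (u q))) < e) ->
    exists l, forall e, 0 < e -> exists N, forall p, (N <= p)%N ->
        ca_norm (ca_add (u p) (ca_opp l)) < e
}.

Arguments ca_zero {c}. Arguments ca_one {c}. Arguments ca_add {c}.
Arguments ca_opp {c}. Arguments ca_mul {c}. Arguments ca_smul {c}.
Arguments ca_star {c}. Arguments ca_norm {c}.

Definition unital_cstar_subalg (A : CstarAlg) (S : A -> Prop) : Prop :=
  S ca_one /\
  (forall u v, S u -> S v -> S (ca_add u v)) /\
  (forall a u, S u -> S (ca_smul a u)) /\
  (forall u v, S u -> S v -> S (ca_mul u v)) /\
  (forall u, S u -> S (ca_star u)) /\
  (forall z, (forall e, 0 < e -> exists w, S w /\ ca_norm (ca_add z (ca_opp w)) < e) -> S z).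

Definition in_Cstar_gen (A : CstarAlg) (I : Type) (x : I -> A) (z : A) : Prop :=
  forall S : A -> Prop, unital_cstar_subalg S -> (forall i, S (x i)) -> S z.

Definition Rlub (E : R -> Prop) : R := epsilon (inhabits 0) (is_lub E).

Inductive ER := ERfin (r : R) | ERpinf | ERminf.

Definition ERle (a b : ER) : Prop :=
  match a, b with
  | ERminf, _ => True
  | _, ERpinf => True
  | ERfin r, ERfin s => r <= s
  | _, _ => False
  end.

Definition Esup (E : ER -> Prop) : ER :=
  epsilon (inhabits ERminf)
    (fun s => (forall z, E z -> ERle z s) /\
              (forall s', (forall z, E z -> ERle z s') -> ERle s s')).

Definition Einf (E : ER -> Prop) : ER :=
  epsilon (inhabits ERminf)
    (fun s => (forall z, E z -> ERle s z) /\
              (forall s', (forall z, E z -> ERle s' z) -> ERle s' s)).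

Definition Elimsup (u : nat -> ER) : ER :=
  Einf (fun z => exists N, z = Esup (fun w => exists k, (N <= k)%N /\ w = u k)).

Definition Mat (k : nat) := 'I_k -> 'I_k -> C.
Definition Vec (k : nat) := 'I_k -> C.

Definition Csum (k : nat) (F : 'I_k -> C) : C := \big[Cadd/C0]_(i < k) F i.
Definition Rsum (k : nat) (F : 'I_k -> R) : R := \big[Rplus/0]_(i < k) F i.

Definition madd k (A B : Mat k) : Mat k := fun i j => Cadd (A i j) (B i j).
Definition msub k (A B : Mat k) : Mat k := fun i j => Cadd (A i j) (Copp (B i j)).
Definition msmul k (a : C) (A : Mat k) : Mat k := fun i j => Cmul a (A i j).
Definition mmul k (A B : Mat k) : Mat k := fun i j => Csum (fun l => Cmul (A i l) (B l j)).
Definition madj k (A : Mat k) : Mat k := fun i j => Cconj (A j i).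
Definition mI k : Mat k := fun i j => if i == j then C1 else C0.

Definition mapply k (A : Mat k) (v : Vec k) : Vec k := fun i => Csum (fun j => Cmul (A i j) (v j)).
Definition vnorm k (v : Vec k) : R := sqrt (Rsum (fun i => Rsqr (Cabs (v i)))).

Definition mopnorm k (A : Mat k) : R :=
  Rlub (fun r => r = 0 \/ exists v : Vec k, vnorm v = 1 /\ r = vnorm (mapply A v)).

Definition msa k (A : Mat k) : Prop := forall i j, A i j = Cconj (A j i).

Definition unitary k (W : Mat k) : Prop :=
  (forall i j, mmul (madj W) W i j = mI i j) /\ (forall i j, mmul W (madj W) i j = mI i j).

Definition mtrace k (A : Mat k) : C := Csum (fun i => A i i).
Definition tau k (A : Mat k) : C := Cmul (CofR (/ INR k)) (mtrace A).

Definition tnorm2 n k (As : 'I_n -> Mat k) : R :=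
  sqrt (Rsum (fun i => Cre (tau (mmul (madj (As i)) (As i))))).

Definition orbit_ball n k (Bs : 'I_n -> Mat k) (omega : R) (As : 'I_n -> Mat k) : Prop :=
  exists W : Mat k, unitary W /\
    tnorm2 (fun i => msub (As i) (mmul (mmul W (Bs i)) (madj W))) < omega.

Definition orbit_covers n k (Sigma : ('I_n -> Mat k) -> Prop) (omega : R) (N : nat) : Prop :=
  exists cs : seq ('I_n -> Mat k),
    size cs = N /\ (forall c, List.In c cs -> Sigma c) /\
    (forall As, Sigma As -> exists c, List.In c cs /\ orbit_ball c omega As).

Definition o2 n k (Sigma : ('I_n -> Mat k) -> Prop) (omega : R) : nat :=
  epsilon (inhabits 0%N)
    (fun N => orbit_covers Sigma omega N /\
              forall M, orbit_covers Sigma omega M -> (N <= M)%N).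

Definition logcov (o k : nat) : ER :=
  match o with
  | 0%N => ERminf
  | _ => ERfin (ln (INR o) / Rsqr (INR k))
  end.

Inductive ncpoly (V : Type) :=
| PC (a b : Q)            (* constant a + b i *)
| PV (v : V)
| PAdd (p q : ncpoly V)
| PMul (p q : ncpoly V).

Arguments PC {V}.

(* equality in the free (Q+iQ)-algebra on V *)
Inductive polyeq (V : Type) : ncpoly V -> ncpoly V -> Prop :=
| pe_refl p : polyeq p p
| pe_sym p q : polyeq p q -> polyeq q p
| pe_trans p q s : polyeq p q -> polyeq q s -> polyeq p s
| pe_add p p' q q' : polyeq p p' -> polyeq q q' -> polyeq (PAdd p q) (PAdd p' q')
| pe_mul p p' q q' : polyeq p p' -> polyeq q q' -> polyeq (PMul p q) (PMul p' q')
| pe_addA p q s : polyeq (PAdd p (PAdd q s)) (PAdd (PAdd p q) s)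
| pe_addC p q : polyeq (PAdd p q) (PAdd q p)
| pe_add0 p : polyeq (PAdd (PC 0%Q 0%Q) p) p
| pe_mulA p q s : polyeq (PMul p (PMul q s)) (PMul (PMul p q) s)
| pe_mul1l p : polyeq (PMul (PC 1%Q 0%Q) p) p
| pe_mul1r p : polyeq (PMul p (PC 1%Q 0%Q)) p
| pe_mul0 p : polyeq (PMul (PC 0%Q 0%Q) p) (PC 0%Q 0%Q)
| pe_mulDl p q s : polyeq (PMul (PAdd p q) s) (PAdd (PMul p s) (PMul q s))
| pe_mulDr p q s : polyeq (PMul p (PAdd q s)) (PAdd (PMul p q) (PMul p s))
| pe_central a b p : polyeq (PMul (PC a b) p) (PMul p (PC a b))
| pe_cadd a b c d : polyeq (PAdd (PC a b) (PC c d)) (PC (a + c)%Q (b + d)%Q)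
| pe_cmul a b c d : polyeq (PMul (PC a b) (PC c d)) (PC (a * c - b * d)%Q (a * d + b * c)%Q)
| pe_cQeq a b a' b' : Qeq a a' -> Qeq b b' -> polyeq (PC a b) (PC a' b').

(* P_1, P_2, ... enumerates all polynomials (P 0 is unused) *)
Definition enumerates_all (V : Type) (P : nat -> ncpoly V) : Prop :=
  forall q, exists r, (1 <= r)%N /\ polyeq (P r) q.

Fixpoint evalA (A : CstarAlg) (V : Type) (X : V -> A) (p : ncpoly V) : A :=
  match p with
  | PC a b => ca_smul (CofQ a b) ca_one
  | PV v => X v
  | PAdd p q => ca_add (evalA X p) (evalA X q)
  | PMul p q => ca_mul (evalA X p) (evalA X q)
  end.

Fixpoint evalM (k : nat) (V : Type) (X : V -> Mat k) (p : ncpoly V) : Mat k :=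
  match p with
  | PC a b => msmul (CofQ a b) (@mI k)
  | PV v => X v
  | PAdd p q => madd (evalM X p) (evalM X q)
  | PMul p q => mmul (evalM X p) (evalM X q)
  end.

Definition join (T : Type) n m (f : 'I_n -> T) (g : 'I_m -> T) : 'I_n + 'I_m -> T :=
  fun v => match v with inl i => f i | inr j => g j end.

Definition GammaXY (A : CstarAlg) n m (x : 'I_n -> A) (y : 'I_m -> A)
    (P : nat -> ncpoly ('I_n + 'I_m)) (Rb : R) (k : nat) (eps : R) (r : nat)
    : ('I_n -> Mat k) -> Prop :=
  fun As => (forall i, msa (As i)) /\
    exists Bs : 'I_m -> Mat k, (forall j, msa (Bs j)) /\
      (forall i, mopnorm (As i) <= Rb) /\ (forall j, mopnorm (Bs j) <= Rb) /\
      (forall j, (1 <= j <= r)%N ->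
         Rabs (mopnorm (evalM (join As Bs) (P j)) - ca_norm (evalA (join x y) (P j))) <= eps).

Arguments GammaXY {A n m} x y P Rb k eps r _.

Definition GammaX (A : CstarAlg) n (x : 'I_n -> A) (P : nat -> ncpoly 'I_n)
    (Rb : R) (k : nat) (eps : R) (r : nat) : ('I_n -> Mat k) -> Prop :=
  fun As => (forall i, msa (As i)) /\ (forall i, mopnorm (As i) <= Rb) /\
      (forall j, (1 <= j <= r)%N ->
         Rabs (mopnorm (evalM As (P j)) - ca_norm (evalA x (P j))) <= eps).

Arguments GammaX {A n} x P Rb k eps r _.

Definition KtopXY (A : CstarAlg) n m (x : 'I_n -> A) (y : 'I_m -> A)
    (P : nat -> ncpoly ('I_n + 'I_m)) (omega : R) : ER :=
  Esup (fun z => exists Rb, 0 < Rb /\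
    z = Einf (fun w => exists eps r, 0 < eps /\ (1 <= r)%N /\
          w = Elimsup (fun k => logcov (o2 (GammaXY x y P Rb k eps r) omega) k))).

Definition KtopX (A : CstarAlg) n (x : 'I_n -> A) (P : nat -> ncpoly 'I_n) (omega : R) : ER :=
  Esup (fun z => exists Rb, 0 < Rb /\
    z = Einf (fun w => exists eps r, 0 < eps /\ (1 <= r)%N /\
          w = Elimsup (fun k => logcov (o2 (GammaX x P Rb k eps r) omega) k))).

(* Main.v *)
Require Import Defs.
From Stdlib Require Import Reals QArith Qreals ClassicalEpsilon.
From mathcomp Require Import ssreflect ssrfun ssrbool eqtype ssrnat seq fintype bigop.
From HB Require Import structures.
From Stdlib Require Import Reals QArith Qreals ClassicalEpsilon Classical Lra Lia Psatz FunctionalExtensionality ZArith.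
From mathcomp Require Import ssreflect ssrfun ssrbool eqtype ssrnat seq fintype bigop finfun.
Require Import Defs.
Set Implicit Arguments.
Unset Strict Implicit.
Local Open Scope R_scope.

Lemma C_ext z w : Cre z = Cre w -> Cim z = Cim w -> z = w.
Proof. by case: z; case: w => ? ? ? ? /= -> ->. Qed.

Ltac Csolve := repeat match goal with z : C |- _ => destruct z end;
  apply C_ext; simpl; ring.

Lemma CaddA : associative Cadd. Proof. move=> *; Csolve. Qed.
Lemma CaddC : commutative Cadd. Proof. move=> *; Csolve. Qed.
Lemma Cadd0l : left_id C0 Cadd. Proof. move=> *; Csolve. Qed.
HB.instance Definition _ := Monoid.isComLaw.Build C C0 Cadd CaddA CaddC Cadd0l.
Lemma Rplus_assoc' : associative Rplus. Proof. move=> *; ring. Qed.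
Lemma Rplus_comm' : commutative Rplus. Proof. move=> *; ring. Qed.
Lemma Rplus_0l' : left_id 0 Rplus. Proof. move=> *; ring. Qed.
HB.instance Definition _ := Monoid.isComLaw.Build R 0 Rplus Rplus_assoc' Rplus_comm' Rplus_0l'.

Lemma Cadd0r z : Cadd z C0 = z. Proof. Csolve. Qed.
Lemma CmulA a b c : Cmul a (Cmul b c) = Cmul (Cmul a b) c. Proof. Csolve. Qed.
Lemma CmulC a b : Cmul a b = Cmul b a. Proof. Csolve. Qed.
Lemma Cmul1l a : Cmul C1 a = a. Proof. Csolve. Qed.
Lemma Cmul1r a : Cmul a C1 = a. Proof. Csolve. Qed.
Lemma Cmul0l a : Cmul C0 a = C0. Proof. Csolve. Qed.
Lemma Cmul0r a : Cmul a C0 = C0. Proof. Csolve. Qed.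
Lemma CmulDl a b c : Cmul (Cadd a b) c = Cadd (Cmul a c) (Cmul b c). Proof. Csolve. Qed.
Lemma CmulDr a b c : Cmul a (Cadd b c) = Cadd (Cmul a b) (Cmul a c). Proof. Csolve. Qed.
Lemma CconjK a : Cconj (Cconj a) = a. Proof. Csolve. Qed.
Lemma CconjD a b : Cconj (Cadd a b) = Cadd (Cconj a) (Cconj b). Proof. Csolve. Qed.
Lemma CconjM a b : Cconj (Cmul a b) = Cmul (Cconj a) (Cconj b). Proof. Csolve. Qed.
Lemma Cconj0 : Cconj C0 = C0. Proof. Csolve. Qed.
Lemma Cconj1 : Cconj C1 = C1. Proof. Csolve. Qed.
Lemma CoppD a b : Copp (Cadd a b) = Cadd (Copp a) (Copp b). Proof. Csolve. Qed.
Lemma CconjN a : Cconj (Copp a) = Copp (Cconj a). Proof. Csolve. Qed.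
Lemma CmulNl a b : Cmul (Copp a) b = Copp (Cmul a b). Proof. Csolve. Qed.
Lemma CmulNr a b : Cmul a (Copp b) = Copp (Cmul a b). Proof. Csolve. Qed.

Lemma Csum_add k (F G : 'I_k -> C) :
  Csum (fun i => Cadd (F i) (G i)) = Cadd (Csum F) (Csum G).
Proof. by rewrite /Csum big_split. Qed.
Lemma Csum_mull k a (F : 'I_k -> C) :
  Csum (fun i => Cmul a (F i)) = Cmul a (Csum F).
Proof.
rewrite /Csum; apply: (big_rec2 (fun x y => x = Cmul a y)); first by rewrite Cmul0r.
by move=> i x y _ ->; rewrite CmulDr.
Qed.
Lemma Csum_mulr k a (F : 'I_k -> C) :
  Csum (fun i => Cmul (F i) a) = Cmul (Csum F) a.
Proof. rewrite CmulC -Csum_mull; apply: eq_bigr => i _; apply: CmulC. Qed.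
Lemma Csum_conj k (F : 'I_k -> C) : Csum (fun i => Cconj (F i)) = Cconj (Csum F).
Proof. rewrite /Csum; symmetry; apply: (big_morph Cconj CconjD Cconj0). Qed.
Lemma Csum_opp k (F : 'I_k -> C) : Csum (fun i => Copp (F i)) = Copp (Csum F).
Proof. symmetry; apply: (big_morph Copp CoppD); Csolve. Qed.
Lemma Csum_exch k (F : 'I_k -> 'I_k -> C) :
  Csum (fun i => Csum (fun j => F i j)) = Csum (fun j => Csum (fun i => F i j)).
Proof. by rewrite /Csum exchange_big. Qed.
Lemma Csum_ext k (F G : 'I_k -> C) : (forall i, F i = G i) -> Csum F = Csum G.
Proof. by move=> h; apply: eq_bigr => i _. Qed.
Lemma Csum_delta k (j : 'I_k) (F : 'I_k -> C) :
  Csum (fun i => if i == j then F i else C0) = F j.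
Proof.
rewrite /Csum (bigD1 j) //= eqxx big1 ?Cadd0r // => i /negbTE -> //.
Qed.
Lemma Csum_delta' k (j : 'I_k) (F : 'I_k -> C) :
  Csum (fun i => if j == i then F i else C0) = F j.
Proof. rewrite -(Csum_delta j F); apply: Csum_ext => i; by rewrite eq_sym. Qed.

Lemma mat_ext k (A B : Mat k) : (forall i j, A i j = B i j) -> A = B.
Proof. move=> h; do 2 (apply: functional_extensionality => ?); apply: h. Qed.

Lemma mmulA k (A B D : Mat k) : mmul A (mmul B D) = mmul (mmul A B) D.
Proof.
apply: mat_ext => i j; rewrite /mmul.
transitivity (Csum (fun l => Csum (fun m => Cmul (Cmul (A i l) (B l m)) (D m j)))).
  apply: Csum_ext => l; rewrite -Csum_mull; apply: Csum_ext => m; apply: CmulA.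
rewrite Csum_exch; apply: Csum_ext => m; by rewrite Csum_mulr.
Qed.
Lemma mmulDl k (A B D : Mat k) : mmul (madd A B) D = madd (mmul A D) (mmul B D).
Proof.
apply: mat_ext => i j; rewrite /mmul /madd -Csum_add; apply: Csum_ext => l; apply: CmulDl.
Qed.
Lemma mmulDr k (A B D : Mat k) : mmul A (madd B D) = madd (mmul A B) (mmul A D).
Proof.
apply: mat_ext => i j; rewrite /mmul /madd -Csum_add; apply: Csum_ext => l; apply: CmulDr.
Qed.
Lemma mmul1l k (A : Mat k) : mmul (@mI k) A = A.
Proof.
apply: mat_ext => i j; rewrite /mmul /mI.
rewrite -(Csum_delta' i (fun l => A l j)); apply: Csum_ext => l.
case: (i == l); [apply: Cmul1l | apply: Cmul0l].
Qed.
Lemma mmul1r k (A : Mat k) : mmul A (@mI k) = A.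
Proof.
apply: mat_ext => i j; rewrite /mmul /mI.
rewrite -(Csum_delta j (fun l => A i l)); apply: Csum_ext => l.
case: (l == j); [apply: Cmul1r | apply: Cmul0r].
Qed.
Lemma mmulZl k a (A B : Mat k) : mmul (msmul a A) B = msmul a (mmul A B).
Proof.
apply: mat_ext => i j; rewrite /mmul /msmul -Csum_mull; apply: Csum_ext => l; by rewrite CmulA.
Qed.
Lemma mmulZr k a (A B : Mat k) : mmul A (msmul a B) = msmul a (mmul A B).
Proof.
apply: mat_ext => i j; rewrite /mmul /msmul -Csum_mull; apply: Csum_ext => l.
by rewrite !CmulA (CmulC a).
Qed.
Lemma maddA k (A B D : Mat k) : madd A (madd B D) = madd (madd A B) D.
Proof. apply: mat_ext => i j; apply: CaddA. Qed.
Lemma maddC k (A B : Mat k) : madd A B = madd B A.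
Proof. apply: mat_ext => i j; apply: CaddC. Qed.
Lemma madjK k (A : Mat k) : madj (madj A) = A.
Proof. apply: mat_ext => i j; apply: CconjK. Qed.
Lemma madj_mul k (A B : Mat k) : madj (mmul A B) = mmul (madj B) (madj A).
Proof.
apply: mat_ext => i j; rewrite /madj /mmul -Csum_conj; apply: Csum_ext => l.
by rewrite CconjM CmulC.
Qed.
Lemma madj_add k (A B : Mat k) : madj (madd A B) = madd (madj A) (madj B).
Proof. apply: mat_ext => i j; apply: CconjD. Qed.
Lemma madj_smul k a (A : Mat k) : madj (msmul a A) = msmul (Cconj a) (madj A).
Proof. apply: mat_ext => i j; apply: CconjM. Qed.
Lemma madj_I k : madj (@mI k) = @mI k.
Proof. apply: mat_ext => i j; rewrite /madj /mI (eq_sym j i); case: (i == j); Csolve. Qed.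
Lemma msmul_I_mul k a (A : Mat k) : mmul (msmul a (@mI k)) A = msmul a A.
Proof. by rewrite mmulZl mmul1l. Qed.
Lemma mI_msmul_mul k a (A : Mat k) : mmul A (msmul a (@mI k)) = msmul a A.
Proof. by rewrite mmulZr mmul1r. Qed.
Lemma msmulA k a b (A : Mat k) : msmul a (msmul b A) = msmul (Cmul a b) A.
Proof. apply: mat_ext => i j; apply: CmulA. Qed.
Lemma msmulDl k a b (A : Mat k) : msmul (Cadd a b) A = madd (msmul a A) (msmul b A).
Proof. apply: mat_ext => i j; apply: CmulDl. Qed.
Lemma msmulDr k a (A B : Mat k) : msmul a (madd A B) = madd (msmul a A) (msmul a B).
Proof. apply: mat_ext => i j; apply: CmulDr. Qed.
Lemma msmul0 k (A : Mat k) : msmul C0 A = (fun _ _ => C0).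
Proof. apply: mat_ext => i j; apply: Cmul0l. Qed.
Lemma madd0l k (A : Mat k) : madd (fun _ _ => C0) A = A.
Proof. apply: mat_ext => i j; apply: Cadd0l. Qed.

Definition FS (T : finType) (f : T -> R) : R := \big[Rplus/0]_(t : T) f t.

Lemma FS_add (T : finType) (f g : T -> R) : FS (fun t => f t + g t) = FS f + FS g.
Proof. by rewrite /FS big_split. Qed.
Lemma FS_scal (T : finType) c (f : T -> R) : FS (fun t => c * f t) = c * FS f.
Proof.
rewrite /FS; apply: (big_rec2 (fun x y => x = c * y)); first by ring.
by move=> i x y _ ->; ring.
Qed.
Lemma FS_ext (T : finType) (f g : T -> R) : (forall t, f t = g t) -> FS f = FS g.
Proof. by move=> h; apply: eq_bigr. Qed.
Lemma FS_le (T : finType) (f g : T -> R) : (forall t, f t <= g t) -> FS f <= FS g.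
Proof.
move=> h; rewrite /FS; apply: (big_rec2 (fun x y => x <= y)); first lra.
move=> i x y _ hxy; have := h i; lra.
Qed.
Lemma FS_nonneg (T : finType) (f : T -> R) : (forall t, 0 <= f t) -> 0 <= FS f.
Proof.
move=> h; rewrite /FS; apply: (big_ind (fun x => 0 <= x)) => //; [lra | move=> *; lra].
Qed.
Lemma FS_term (T : finType) (f : T -> R) t0 : (forall t, 0 <= f t) -> f t0 <= FS f.
Proof.
move=> h; rewrite /FS (bigD1 t0) //=.
have : 0 <= \big[Rplus/0]_(i | i != t0) f i.
  apply: (big_ind (fun x => 0 <= x)) => //; [lra | move=> *; lra].
lra.
Qed.
Lemma FS_const (T : finType) c : FS (fun _ : T => c) = INR #|T| * c.
Proof.
rewrite /FS big_const; elim: #|T| => [|m IH]; first by rewrite /=; ring.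
rewrite iterS IH S_INR; ring.
Qed.

Lemma CS_quad a b c : (forall t, 0 <= t * t * a - 2 * t * b + c) -> 0 <= a ->
  b <= sqrt a * sqrt c.
Proof.
move=> h ha.
case: (Rle_lt_dec b 0) => hb.
  have := sqrt_pos a; have := sqrt_pos c; nra.
have hc : 0 <= c by have := h 0; lra.
case: (Req_dec a 0) => ha0.
  have h1 := h ((c + 1) / (2 * b)); rewrite ha0 in h1.
  have : 2 * ((c + 1) / (2 * b)) * b = c + 1 by field; lra.
  nra.
have ha' : 0 < a by lra.
have key : b * b <= a * c.
  have := h (b / a).
  have -> : b / a * (b / a) * a - 2 * (b / a) * b + c = c - b * b / a by field; lra.
  move=> hh.
  have : b * b / a <= c by lra.
  move=> hh2. have := Rmult_le_compat_l a _ _ (Rlt_le _ _ ha') hh2.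
  have -> : a * (b * b / a) = b * b by field; lra.
  lra.
rewrite -sqrt_mult //.
rewrite -(sqrt_Rsqr b); last lra.
apply: sqrt_le_1_alt; rewrite /Rsqr; lra.
Qed.

Lemma FS_minkowski (T : finType) (f g : T -> R) :
  sqrt (FS (fun t => (f t + g t) * (f t + g t))) <=
  sqrt (FS (fun t => f t * f t)) + sqrt (FS (fun t => g t * g t)).
Proof.
set a := FS (fun t => f t * f t); set b := FS (fun t => f t * g t);
set c := FS (fun t => g t * g t).
have ha : 0 <= a by apply: FS_nonneg => t; nra.
have hc : 0 <= c by apply: FS_nonneg => t; nra.
have hb : b <= sqrt a * sqrt c.
  apply: CS_quad => // t.
  have -> : t * t * a - 2 * t * b + c = FS (fun s => (t * f s - g s) * (t * f s - g s)).
    rewrite /a /b /c.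
    have -> : (fun s => (t * f s - g s) * (t * f s - g s)) =
      (fun s => (t * t) * (f s * f s) + ((-2 * t) * (f s * g s) + (g s * g s))).
      by apply: functional_extensionality => s; ring.
    rewrite !FS_add !FS_scal; ring.
  apply: FS_nonneg => s; apply: Rle_0_sqr.
have -> : FS (fun t => (f t + g t) * (f t + g t)) = a + 2 * b + c.
  have -> : (fun t => (f t + g t) * (f t + g t)) =
    (fun s => (f s * f s) + (2 * (f s * g s) + (g s * g s))).
    by apply: functional_extensionality => s; ring.
  rewrite !FS_add FS_scal; rewrite /a /b /c; ring.
have sa := sqrt_pos a; have sc := sqrt_pos c.
rewrite -(sqrt_Rsqr (sqrt a + sqrt c)); last lra.
apply: sqrt_le_1_alt; rewrite /Rsqr.
have e1 := sqrt_sqrt a ha; have e2 := sqrt_sqrt c hc. nra.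
Qed.

Lemma Cabs_ge0 z : 0 <= Cabs z. Proof. apply: sqrt_pos. Qed.
Lemma Cabs_sq z : Cabs z * Cabs z = Cre z * Cre z + Cim z * Cim z.
Proof. rewrite /Cabs sqrt_sqrt /Rsqr //; nra. Qed.
Lemma Cabs_mul a b : Cabs (Cmul a b) = Cabs a * Cabs b.
Proof.
rewrite /Cabs -sqrt_mult; try (rewrite /Rsqr; nra).
congr sqrt; rewrite /Rsqr /=; ring.
Qed.
Lemma Cre_le z : Rabs (Cre z) <= Cabs z.
Proof.
rewrite /Cabs -sqrt_Rsqr_abs; apply: sqrt_le_1_alt; rewrite /Rsqr; nra.
Qed.
Lemma Cim_le z : Rabs (Cim z) <= Cabs z.
Proof.
rewrite /Cabs -sqrt_Rsqr_abs; apply: sqrt_le_1_alt; rewrite /Rsqr; nra.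
Qed.
Lemma Cabs_add a b : Cabs (Cadd a b) <= Cabs a + Cabs b.
Proof.
have := FS_minkowski (fun t : bool => if t then Cre a else Cim a)
                     (fun t : bool => if t then Cre b else Cim b).
by rewrite /FS !big_bool /Cabs /Rsqr /=.
Qed.
Lemma Cabs_conj z : Cabs (Cconj z) = Cabs z.
Proof. rewrite /Cabs /Rsqr /=; congr sqrt; ring. Qed.
Lemma Cabs_opp z : Cabs (Copp z) = Cabs z.
Proof. rewrite /Cabs /Rsqr /=; congr sqrt; ring. Qed.
Lemma Cabs_C0 : Cabs C0 = 0.
Proof. rewrite /Cabs /Rsqr /= Rmult_0_l Rplus_0_l; apply: sqrt_0. Qed.
Lemma Cabs_C1 : Cabs C1 = 1.
Proof. rewrite /Cabs /Rsqr /= Rmult_0_l Rplus_0_r Rmult_1_l; apply: sqrt_1. Qed.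
Lemma Cabs_CofR r : Cabs (CofR r) = Rabs r.
Proof. rewrite /Cabs /Rsqr /= Rmult_0_l Rplus_0_r -sqrt_Rsqr_abs //. Qed.

Lemma Csum_abs k (F : 'I_k -> C) : Cabs (Csum F) <= FS (fun i => Cabs (F i)).
Proof.
rewrite /Csum /FS; apply: (big_rec2 (fun x y => Cabs x <= y)); first by rewrite Cabs_C0; lra.
move=> i y x _ h; have := Cabs_add (F i) y; lra.
Qed.

Definition comp (z : C) (b : bool) := if b then Cre z else Cim z.
Lemma vnorm_FS k (v : Vec k) :
  vnorm v = sqrt (FS (fun t : 'I_k * bool => comp (v t.1) t.2 * comp (v t.1) t.2)).
Proof.
rewrite /vnorm /Rsum /FS -(pair_bigA _ (fun i b => comp (v i) b * comp (v i) b)).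
congr sqrt; apply: eq_bigr => i _; rewrite big_bool /= /Rsqr Cabs_sq; ring.
Qed.
Lemma vnorm_ge0 k (v : Vec k) : 0 <= vnorm v. Proof. apply: sqrt_pos. Qed.
Definition vadd k (u w : Vec k) : Vec k := fun i => Cadd (u i) (w i).
Definition vscale k c (u : Vec k) : Vec k := fun i => Cmul c (u i).
Lemma vnorm_add k (u w : Vec k) : vnorm (vadd u w) <= vnorm u + vnorm w.
Proof.
rewrite !vnorm_FS.
have := FS_minkowski (fun t : 'I_k * bool => comp (u t.1) t.2) (fun t => comp (w t.1) t.2).
have -> : (fun t : 'I_k * bool => comp (vadd u w t.1) t.2 * comp (vadd u w t.1) t.2) =
  (fun t => (comp (u t.1) t.2 + comp (w t.1) t.2) * (comp (u t.1) t.2 + comp (w t.1) t.2)).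
  by apply: functional_extensionality => -[i []].
done.
Qed.
Lemma vnorm_scale k c (u : Vec k) : vnorm (vscale c u) = Cabs c * vnorm u.
Proof.
rewrite /vnorm -(sqrt_Rsqr (Cabs c)); last exact: Cabs_ge0.
rewrite -sqrt_mult; [|apply: Rle_0_sqr|].
  congr sqrt; rewrite /Rsum -/(FS _) -/(FS _) -FS_scal; apply: FS_ext => i.
  by rewrite /vscale Cabs_mul /Rsqr; ring.
apply: FS_nonneg => i; apply: Rle_0_sqr.
Qed.
Lemma vnorm_entry k (u : Vec k) i : Cabs (u i) <= vnorm u.
Proof.
rewrite /vnorm -(sqrt_Rsqr (Cabs (u i))); last exact: Cabs_ge0.
apply: sqrt_le_1_alt; rewrite /Rsum -/(FS _).
apply: FS_term => j; apply: Rle_0_sqr.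
Qed.
Lemma vnorm_bound k (u : Vec k) M : 0 <= M -> (forall i, Cabs (u i) <= M) ->
  vnorm u <= sqrt (INR k) * M.
Proof.
move=> hM h; rewrite /vnorm -(sqrt_Rsqr M) // -sqrt_mult; [|apply: pos_INR|apply: Rle_0_sqr].
apply: sqrt_le_1_alt; rewrite /Rsum -/(FS _).
have -> : INR k * Rsqr M = FS (fun _ : 'I_k => Rsqr M) by rewrite FS_const card_ord.
apply: FS_le => i; rewrite /Rsqr; have := h i; have := Cabs_ge0 (u i); nra.
Qed.

Lemma mapply_scale k (A : Mat k) c v : mapply A (vscale c v) = vscale c (mapply A v).
Proof.
apply: functional_extensionality => i; rewrite /mapply /vscale -Csum_mull.
apply: Csum_ext => j; by rewrite !CmulA (CmulC c).
Qed.
Lemma mapply_add k (A B : Mat k) v : mapply (madd A B) v = vadd (mapply A v) (mapply B v).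
Proof.
apply: functional_extensionality => i; rewrite /mapply /vadd -Csum_add.
apply: Csum_ext => j; apply: CmulDl.
Qed.
Lemma mapply_mul k (A B : Mat k) v : mapply (mmul A B) v = mapply A (mapply B v).
Proof.
apply: functional_extensionality => i; rewrite /mapply /mmul.
transitivity (Csum (fun j => Csum (fun l => Cmul (A i l) (Cmul (B l j) (v j))))).
  apply: Csum_ext => j; rewrite -Csum_mulr; apply: Csum_ext => l; by rewrite CmulA.
rewrite Csum_exch; apply: Csum_ext => l; by rewrite Csum_mull.
Qed.
Lemma mapply_sI k c (v : Vec k) : mapply (msmul c (@mI k)) v = vscale c v.
Proof.
apply: functional_extensionality => i; rewrite /mapply /vscale /msmul /mI.
rewrite -(Csum_delta' i (fun j => Cmul c (v j))); apply: Csum_ext => j.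
by case: (i == j); rewrite ?Cmul1r ?Cmul0r ?Cmul0l ?CmulA ?Cmul1r.
Qed.

Definition Kbound k (A : Mat k) : R :=
  sqrt (INR k) * (INR k * FS (fun t : 'I_k * 'I_k => Cabs (A t.1 t.2))).
Lemma Kbound_ge0 k (A : Mat k) : 0 <= Kbound A.
Proof.
apply: Rmult_le_pos; first exact: sqrt_pos.
apply: Rmult_le_pos; first exact: pos_INR.
apply: FS_nonneg => t; exact: Cabs_ge0.
Qed.
Lemma mapply_crude k (A : Mat k) v : vnorm (mapply A v) <= Kbound A * vnorm v.
Proof.
set K0 := FS (fun t : 'I_k * 'I_k => Cabs (A t.1 t.2)).
have hK0 : 0 <= K0 by apply: FS_nonneg => t; exact: Cabs_ge0.
have hv := vnorm_ge0 v.
rewrite /Kbound -/K0 Rmult_assoc; apply: vnorm_bound; first by apply: Rmult_le_pos => //; apply: Rmult_le_pos => //; exact: pos_INR.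
move=> i; apply: Rle_trans (Csum_abs _) _.
have -> : INR k * K0 * vnorm v = FS (fun _ : 'I_k => K0 * vnorm v)
  by rewrite FS_const card_ord; ring.
apply: FS_le => j; rewrite Cabs_mul; apply: Rmult_le_compat; try exact: Cabs_ge0.
  exact: (@FS_term _ (fun t : 'I_k * 'I_k => Cabs (A t.1 t.2)) (i, j) (fun t => Cabs_ge0 _)).
exact: vnorm_entry.
Qed.

Definition opset k (A : Mat k) :=
  fun r => r = 0 \/ exists v : Vec k, vnorm v = 1 /\ r = vnorm (mapply A v).
Lemma mopnorm_lub k (A : Mat k) : is_lub (opset A) (mopnorm A).
Proof.
rewrite /mopnorm /Rlub; apply: epsilon_spec.
have [l hl] : {m | is_lub (opset A) m}.
  apply: completeness.
    exists (Kbound A) => r [->|[v [h1 ->]]]; first exact: Kbound_ge0.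
    by have := mapply_crude A v; rewrite h1 Rmult_1_r.
  by exists 0; left.
by exists l.
Qed.
Lemma mopnorm_ge0 k (A : Mat k) : 0 <= mopnorm A.
Proof. case: (mopnorm_lub A) => h _; apply: h; by left. Qed.
Lemma mopnorm_le k (A : Mat k) c : 0 <= c ->
  (forall v, vnorm v = 1 -> vnorm (mapply A v) <= c) -> mopnorm A <= c.
Proof.
move=> hc h; case: (mopnorm_lub A) => _ h2; apply: h2 => r [->|[v [h1 ->]]] //.
exact: h.
Qed.
Lemma mopnorm_unit k (A : Mat k) v : vnorm v = 1 -> vnorm (mapply A v) <= mopnorm A.
Proof. move=> h; case: (mopnorm_lub A) => h1 _; apply: h1; right; by exists v. Qed.
Lemma mopnorm_bound k (A : Mat k) v : vnorm (mapply A v) <= mopnorm A * vnorm v.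
Proof.
have hv := vnorm_ge0 v; have hm := mopnorm_ge0 A.
case: (Req_dec (vnorm v) 0) => h0.
  have := mapply_crude A v; rewrite h0 Rmult_0_r => h; rewrite Rmult_0_r; exact: h.
have hp : 0 < vnorm v by lra.
set u := vscale (CofR (/ vnorm v)) v.
have hu : vnorm u = 1.
  rewrite /u vnorm_scale Cabs_CofR Rabs_right; last (left; apply: Rinv_0_lt_compat; lra).
  field; lra.
have := mopnorm_unit A hu; rewrite /u mapply_scale vnorm_scale Cabs_CofR.
rewrite Rabs_right; last (left; apply: Rinv_0_lt_compat; lra).
move=> h; have := Rmult_le_compat_l (vnorm v) _ _ (Rlt_le _ _ hp) h.
have -> : vnorm v * (/ vnorm v * vnorm (mapply A v)) = vnorm (mapply A v) by field; lra.
nra.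
Qed.
Lemma mopnorm_add k (A B : Mat k) : mopnorm (madd A B) <= mopnorm A + mopnorm B.
Proof.
apply: mopnorm_le; first by have := mopnorm_ge0 A; have := mopnorm_ge0 B; lra.
move=> v hv; rewrite mapply_add; apply: Rle_trans (vnorm_add _ _) _.
have := mopnorm_bound A v; have := mopnorm_bound B v; rewrite hv; lra.
Qed.
Lemma mopnorm_mul k (A B : Mat k) : mopnorm (mmul A B) <= mopnorm A * mopnorm B.
Proof.
apply: mopnorm_le; first by apply: Rmult_le_pos; exact: mopnorm_ge0.
move=> v hv; rewrite mapply_mul; apply: Rle_trans (mopnorm_bound _ _) _.
apply: Rmult_le_compat_l; first exact: mopnorm_ge0.
by have := mopnorm_bound B v; rewrite hv Rmult_1_r.
Qed.
Lemma mopnorm_sI k c : mopnorm (msmul c (@mI k)) <= Cabs c.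
Proof.
apply: mopnorm_le; first exact: Cabs_ge0.
move=> v hv; by rewrite mapply_sI vnorm_scale hv Rmult_1_r; lra.
Qed.
Lemma mopnorm_entry k (A : Mat k) i j : Cabs (A i j) <= mopnorm A.
Proof.
set e : Vec k := fun l => if l == j then C1 else C0.
have he : vnorm e = 1.
  apply: Rle_antisym.
    rewrite -sqrt_1; apply: sqrt_le_1_alt; rewrite /Rsum -/(FS _).
    rewrite /FS (bigD1 j) //= big1 /e ?eqxx ?Cabs_C1 /Rsqr; first lra.
    by move=> l /negbTE ->; rewrite Cabs_C0; ring.
  by have := vnorm_entry e j; rewrite /e eqxx Cabs_C1.
have := mopnorm_unit A he; apply: Rle_trans.
have -> : A i j = mapply A e i.
  rewrite /mapply /e -(Csum_delta j (fun l => A i l)); apply: Csum_ext => l.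
  by case: (l == j); rewrite ?Cmul1r ?Cmul0r.
exact: vnorm_entry.
Qed.

Definition entryf n k (X : 'I_n -> Mat k) (t : ('I_n * ('I_k * 'I_k)) * bool) : R :=
  comp (X t.1.1 t.1.2.1 t.1.2.2) t.2.

Lemma Cre_Csum k (F : 'I_k -> C) : Cre (Csum F) = FS (fun i => Cre (F i)).
Proof. rewrite /Csum /FS; apply: (big_morph Cre) => //. Qed.

Lemma FS_pair (T1 T2 : finType) (f : T1 * T2 -> R) :
  FS f = FS (fun x => FS (fun y => f (x, y))).
Proof. by rewrite /FS pair_bigA; apply: eq_bigr => -[x y]. Qed.
Lemma FS_exch (T1 T2 : finType) (f : T1 -> T2 -> R) :
  FS (fun x => FS (fun y => f x y)) = FS (fun y => FS (fun x => f x y)).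
Proof. by rewrite /FS exchange_big. Qed.
Lemma FS_bool (f : bool -> R) : FS f = f true + f false.
Proof. by rewrite /FS big_bool. Qed.

Lemma tnorm2_FS n k (X : 'I_n -> Mat k) :
  tnorm2 X = sqrt (/ INR k * FS (fun t => entryf X t * entryf X t)).
Proof.
rewrite /tnorm2; congr sqrt.
rewrite /Rsum -/(FS _) FS_pair FS_pair -FS_scal; apply: FS_ext => i.
rewrite FS_pair /tau /= Rmult_0_l Rminus_0_r /mtrace Cre_Csum; congr Rmult.
rewrite FS_exch; apply: FS_ext => l; rewrite /mmul Cre_Csum; apply: FS_ext => a.
by rewrite FS_bool /entryf /=; ring.
Qed.

Lemma tnorm2_ge0 n k (X : 'I_n -> Mat k) : 0 <= tnorm2 X.
Proof. apply: sqrt_pos. Qed.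

Lemma tnorm2_tri n k (U V W : 'I_n -> Mat k) :
  (forall t, entryf U t = entryf V t + entryf W t) -> tnorm2 U <= tnorm2 V + tnorm2 W.
Proof.
move=> h; rewrite !tnorm2_FS.
have hk : 0 <= / INR k.
  case: k U V W h => [|k] *; first by rewrite Rinv_0; lra.
  left; apply: Rinv_0_lt_compat; apply: lt_0_INR; lia.
have hS := fun (Z : 'I_n -> Mat k) => FS_nonneg (fun t => Rle_0_sqr (entryf Z t)).
rewrite (sqrt_mult _ _ hk (hS U)) (sqrt_mult _ _ hk (hS V)) (sqrt_mult _ _ hk (hS W)).
rewrite -Rmult_plus_distr_l; apply: Rmult_le_compat_l; first exact: sqrt_pos.
have -> : (fun t => entryf U t * entryf U t) =
   (fun t => (entryf V t + entryf W t) * (entryf V t + entryf W t)).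
  by apply: functional_extensionality => t; rewrite h.
apply: FS_minkowski.
Qed.

Definition tsub n k (X Y : 'I_n -> Mat k) : 'I_n -> Mat k := fun i => msub (X i) (Y i).
Definition dist2 n k (X Y : 'I_n -> Mat k) := tnorm2 (tsub X Y).

Lemma entryf_sub n k (X Y : 'I_n -> Mat k) t : entryf (tsub X Y) t = entryf X t - entryf Y t.
Proof. by case: t => [[i [a l]] []]; rewrite /entryf /tsub /msub /comp /=; ring. Qed.

Lemma dist2_tri n k (X Y Z : 'I_n -> Mat k) : dist2 X Z <= dist2 X Y + dist2 Y Z.
Proof. apply: tnorm2_tri => t; rewrite !entryf_sub; ring. Qed.
Lemma dist2_sym n k (X Y : 'I_n -> Mat k) : dist2 X Y = dist2 Y X.
Proof.
rewrite /dist2 !tnorm2_FS; congr (sqrt (_ * _)); apply: FS_ext => t.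
rewrite !entryf_sub; ring.
Qed.

Lemma mtrace_comm k (A B : Mat k) : mtrace (mmul A B) = mtrace (mmul B A).
Proof.
rewrite /mtrace /mmul Csum_exch; apply: Csum_ext => i; apply: Csum_ext => j; apply: CmulC.
Qed.
Lemma unitaryE k (W : Mat k) : unitary W -> mmul (madj W) W = @mI k /\ mmul W (madj W) = @mI k.
Proof. by case=> h1 h2; split; apply: mat_ext. Qed.
Lemma unitary_I k : unitary (@mI k).
Proof. by rewrite /unitary madj_I mmul1l. Qed.
Lemma unitary_adj k (W : Mat k) : unitary W -> unitary (madj W).
Proof. by case=> h1 h2; split; rewrite madjK. Qed.
Lemma unitary_mul k (U W : Mat k) : unitary U -> unitary W -> unitary (mmul U W).
Proof.
move=> /unitaryE [u1 u2] /unitaryE [w1 w2]; split => i j; rewrite madj_mul.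
  by rewrite mmulA -(mmulA (madj W)) u1 mmul1r w1.
by rewrite mmulA -(mmulA U) w2 mmul1r u2.
Qed.

Definition conjt n k (W : Mat k) (X : 'I_n -> Mat k) : 'I_n -> Mat k :=
  fun i => mmul (mmul W (X i)) (madj W).

Lemma conjt_comp n k (U W : Mat k) (X : 'I_n -> Mat k) :
  conjt U (conjt W X) = conjt (mmul U W) X.
Proof.
apply: functional_extensionality => i; rewrite /conjt madj_mul.
by rewrite !mmulA.
Qed.
Lemma conjt_I n k (X : 'I_n -> Mat k) : conjt (@mI k) X = X.
Proof. apply: functional_extensionality => i; by rewrite /conjt madj_I mmul1l mmul1r. Qed.

Lemma tnorm2_conj n k (W : Mat k) (X : 'I_n -> Mat k) : unitary W ->
  tnorm2 (conjt W X) = tnorm2 X.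
Proof.
move=> /unitaryE [w1 w2]; rewrite /tnorm2 /conjt; congr sqrt; rewrite /Rsum.
apply: eq_bigr => i _; congr Cre; rewrite /tau; congr Cmul.
have e1 : madj (mmul (mmul W (X i)) (madj W)) = mmul (mmul W (madj (X i))) (madj W).
  by rewrite madj_mul madjK madj_mul mmulA.
rewrite e1.
have e2 : mmul (mmul (mmul W (madj (X i))) (madj W)) (mmul (mmul W (X i)) (madj W))
   = mmul W (mmul (mmul (madj (X i)) (X i)) (madj W)).
  rewrite -!mmulA; congr mmul; congr mmul.
  by rewrite mmulA w1 mmul1l.
rewrite e2 mtrace_comm -mmulA w1 mmul1r //.
Qed.

Lemma msub_mul_l k (A B D : Mat k) : mmul (msub A B) D = msub (mmul A D) (mmul B D).
Proof.
apply: mat_ext => i j; rewrite /mmul /msub -Csum_opp -Csum_add; apply: Csum_ext => l.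
by rewrite CmulDl CmulNl.
Qed.
Lemma msub_mul_r k (A B D : Mat k) : mmul D (msub A B) = msub (mmul D A) (mmul D B).
Proof.
apply: mat_ext => i j; rewrite /mmul /msub -Csum_opp -Csum_add; apply: Csum_ext => l.
by rewrite CmulDr CmulNr.
Qed.
Lemma dist2_conj n k (W : Mat k) (X Y : 'I_n -> Mat k) : unitary W ->
  dist2 (conjt W X) (conjt W Y) = dist2 X Y.
Proof.
move=> hW; rewrite /dist2 -(tnorm2_conj (tsub X Y) hW); congr tnorm2.
apply: functional_extensionality => i; by rewrite /tsub /conjt msub_mul_r msub_mul_l.
Qed.

Lemma orbit_ballE n k (c : 'I_n -> Mat k) om X :
  orbit_ball c om X <-> exists W, unitary W /\ dist2 X (conjt W c) < om.
Proof. by []. Qed.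

Lemma orbit_ball2 n k (c a b : 'I_n -> Mat k) om :
  orbit_ball c om b -> orbit_ball c om a -> orbit_ball a (2 * om) b.
Proof.
move=> [U [hU hb]] [W [hW ha]].
have hWa := unitary_adj hW.
exists (mmul U (madj W)); split; first exact: unitary_mul.
rewrite -/(dist2 _ _) in hb ha *.
apply: Rle_lt_trans (dist2_tri b (conjt U c) _) _.
have -> : dist2 (conjt U c) (conjt (mmul U (madj W)) a) = dist2 a (conjt W c).
  rewrite -conjt_comp dist2_conj // -(dist2_conj _ _ hW) conjt_comp.
  case: (unitaryE hW) => _ ->; rewrite conjt_I dist2_sym //.
have ha2 : dist2 a (conjt W c) < om by exact: ha.
have hb2 : dist2 b (conjt U c) < om by exact: hb.
lra.
Qed.

Definition pickP (T : Type) (P : T -> Prop) : option T :=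
  match excluded_middle_informative (exists x, P x) with
  | left h => Some (proj1_sig (constructive_indefinite_description _ h))
  | right _ => None
  end.
Lemma pickP_some T (P : T -> Prop) x : pickP P = Some x -> P x.
Proof.
rewrite /pickP; case: excluded_middle_informative => // h [<-].
exact: proj2_sig.
Qed.
Lemma pickP_ex T (P : T -> Prop) : (exists x, P x) -> exists y, pickP P = Some y.
Proof. rewrite /pickP; case: excluded_middle_informative => // h _; by eexists. Qed.

Lemma In_pmap (T U : Type) (f : T -> option U) s y :
  List.In y (pmap f s) <-> exists x, List.In x s /\ f x = Some y.
Proof.
elim: s => [|x s IH] /=; first by split => // -[? []].
case e: (f x) => [z|] /=; split.
- case=> [e1|h]; first by subst; exists x; auto.
  case/IH: h => w [h1 h2]; by exists w; auto.
- case=> w [[e1|h] h2]; first by subst; left; congruence.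
  by right; apply/IH; exists w.
- move/IH => [w [h1 h2]]; by exists w; auto.
- case=> w [[e1|h] h2]; first by subst; congruence.
  by apply/IH; exists w.
Qed.
Lemma size_pmap_le (T U : Type) (f : T -> option U) s : (size (pmap f s) <= size s)%N.
Proof.
elim: s => [|x s IH] //=; case: (f x) => [z|] /=; first by rewrite ltnS.
exact: leqW.
Qed.
Lemma In_mem (T : eqType) (x : T) s : x \in s -> List.In x s.
Proof.
elim: s => [|y s IH] //=; rewrite in_cons => /orP [/eqP ->|h]; [by left|by right; auto].
Qed.

Lemma ex_min (P : nat -> Prop) : (exists N, P N) -> exists N, P N /\ forall M, P M -> (N <= M)%N.
Proof.
move=> [N hN]; apply: NNPP => hne.
suff : forall m, (forall j, (j < m)%N -> ~ P j). by move/(_ N.+1 N (ltnSn N)).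
elim=> [|m IH] j //; rewrite ltnS leq_eqVlt => /orP [/eqP ->|h]; last exact: IH.
move=> hm; apply: hne; exists m; split => // M hM.
case: (leqP m M) => // hlt; by case: (IH M hlt).
Qed.

Lemma o2_spec n k (S : ('I_n -> Mat k) -> Prop) om :
  (exists N, orbit_covers S om N) ->
  orbit_covers S om (o2 S om) /\ forall M, orbit_covers S om M -> (o2 S om <= M)%N.
Proof.
move=> h; exact: (epsilon_spec (inhabits 0%N) (fun N => orbit_covers S om N /\ forall M, orbit_covers S om M -> (N <= M)%N) (ex_min h)).
Qed.

Lemma o2_sub n k (S1 S2 : ('I_n -> Mat k) -> Prop) om :
  (forall X, S1 X -> S2 X) -> (exists N, orbit_covers S2 om N) ->
  (o2 S1 (2 * om) <= o2 S2 om)%N.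
Proof.
move=> h12 hex; case: (o2_spec hex) => [[cs [hsz [hin hcov]]] _].
set reps := pmap (fun c => pickP (fun a => S1 a /\ orbit_ball c om a)) cs.
have hc1 : orbit_covers S1 (2 * om) (size reps).
  exists reps; split => //; split.
    move=> a; rewrite /reps => /In_pmap [c [_ hc]]; by case: (pickP_some hc).
  move=> b hb; case: (hcov b (h12 _ hb)) => c [hc hbc].
  case: (pickP_ex (P := fun a => S1 a /\ orbit_ball c om a)); first by exists b.
  move=> a ha; exists a; split; first by apply/In_pmap; exists c.
  case: (pickP_some ha) => _ hac; exact: orbit_ball2 hbc hac.
case: (o2_spec (ex_intro _ _ hc1)) => _ /(_ _ hc1) h.
apply: leq_trans h _; rewrite -hsz; exact: size_pmap_le.
Qed.

Lemma Rabs_le_bw r b : Rabs r <= b -> - b <= r <= b.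
Proof. move=> h; split; [have := Rabs_Ropp r; have := Rle_abs (- r); lra | have := Rle_abs r; lra]. Qed.

Lemma up_bounds x : x < IZR (up x) /\ IZR (up x) <= x + 1.
Proof. case: (archimed x) => h1 h2; split; lra. Qed.

Lemma up_mono x y : x <= y -> (up x <= up y)%Z.
Proof.
move=> h; case: (up_bounds x) => a1 a2; case: (up_bounds y) => b1 b2.
have : IZR (up x) < IZR (up y) + 1 by lra.
rewrite -plus_IZR => /lt_IZR; lia.
Qed.

Lemma up_pos x : 0 <= x -> (0 < up x)%Z.
Proof. move=> h; case: (up_bounds x) => a1 _; apply: lt_IZR; lra. Qed.

Lemma up_close x y : up x = up y -> Rabs (x - y) < 1.
Proof.
move=> e; case: (up_bounds x) => a1 a2; case: (up_bounds y) => b1 b2.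
rewrite e in a1 a2; apply: Rabs_def1; lra.
Qed.

Section Cover.
Variables (n k : nat) (S : ('I_n -> Mat k) -> Prop) (Rb om : R).
Hypothesis hRb : 0 <= Rb.
Hypothesis hom : 0 < om.
Hypothesis hS : forall X, S X -> forall t, Rabs (entryf X t) <= Rb.

Let T := (('I_n * ('I_k * 'I_k)) * bool)%type.
Let c0 := sqrt (/ INR k * INR #|{: T}|).
Let del := om / (c0 + 1).
Lemma c0_ge0 : 0 <= c0. Proof. exact: sqrt_pos. Qed.
Lemma del_pos : 0 < del.
Proof. rewrite /del; have := c0_ge0; move=> h; apply: Rdiv_lt_0_compat; lra. Qed.
Let y0 := 2 * Rb / del.
Let M := Z.to_nat (up y0).
Let q (r : R) : nat := Z.to_nat (up ((r + Rb) / del)).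

Lemma q_bound r : Rabs r <= Rb -> (q r < M.+1)%N.
Proof.
move=> h; rewrite ltnS /q /M; apply/leP.
have hd := del_pos.
have h0 : 0 <= (r + Rb) / del.
  apply: Rmult_le_pos; [have := Rabs_le_bw h; lra | left; apply: Rinv_0_lt_compat; lra].
have h1 : (r + Rb) / del <= y0.
  rewrite /y0 /Rdiv; apply: Rmult_le_compat_r; first (left; apply: Rinv_0_lt_compat; lra).
  have := Rabs_le_bw h; lra.
have := up_mono h1; have := up_pos h0; lia.
Qed.

Lemma q_close r r' : Rabs r <= Rb -> Rabs r' <= Rb -> q r = q r' -> Rabs (r - r') < del.
Proof.
move=> h h' e.
have hd := del_pos.
have p0 : forall s, Rabs s <= Rb -> 0 <= (s + Rb) / del.
  move=> s hs; apply: Rmult_le_pos; last (left; apply: Rinv_0_lt_compat; lra).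
  have := Rabs_le_bw hs; lra.
have e2 : up ((r + Rb) / del) = up ((r' + Rb) / del).
  move: e; rewrite /q; have := up_pos (p0 _ h); have := up_pos (p0 _ h'); lia.
have := up_close e2.
have -> : (r + Rb) / del - (r' + Rb) / del = (r - r') / del by field; lra.
rewrite /Rdiv Rabs_mult Rabs_inv (Rabs_right del); last lra.
move=> hh; have := Rmult_lt_compat_r del _ _ hd hh.
have -> : Rabs (r - r') * / del * del = Rabs (r - r') by field; lra.
lra.
Qed.

Definition codeX (X : 'I_n -> Mat k) : {ffun T -> 'I_M.+1} :=
  [ffun t => inord (q (entryf X t))].

Lemma dist_small (X Y : 'I_n -> Mat k) :
  (forall t, Rabs (entryf X t - entryf Y t) < del) -> dist2 X Y < om.
Proof.
move=> h; have hd := del_pos; have hc := c0_ge0.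
have hk : 0 <= / INR k.
  case: k X Y h hc => [|k'] *; first by rewrite Rinv_0; lra.
  left; apply: Rinv_0_lt_compat; apply: lt_0_INR; lia.
rewrite /dist2 tnorm2_FS.
apply: Rle_lt_trans (_ : c0 * del < om); last first.
  rewrite /del; apply: (Rmult_lt_reg_r (c0 + 1)); first lra.
  have -> : c0 * (om / (c0 + 1)) * (c0 + 1) = c0 * om by field; lra.
  nra.
rewrite /c0 -(sqrt_Rsqr del); last lra.
rewrite -sqrt_mult; [|apply: Rmult_le_pos => //; exact: pos_INR|apply: Rle_0_sqr].
apply: sqrt_le_1_alt; rewrite Rmult_assoc; apply: Rmult_le_compat_l => //.
have -> : INR #|{: T}| * Rsqr del = FS (fun _ : T => Rsqr del) by rewrite FS_const.
apply: FS_le => t; rewrite entryf_sub /Rsqr.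
have := h t; move: (entryf X t - entryf Y t) => d hd2.
have := Rabs_def2 _ _ hd2; nra.
Qed.

Lemma cover_exists : exists N, orbit_covers S om N.
Proof.
set reps := pmap (fun c => pickP (fun X => S X /\ codeX X = c)) (enum {: {ffun T -> 'I_M.+1}}).
exists (size reps); exists reps; split => //; split.
  move=> X; rewrite /reps => /In_pmap [c [_ hc]]; by case: (pickP_some hc).
move=> X hX.
case: (pickP_ex (P := fun Y => S Y /\ codeX Y = codeX X)); first by exists X.
move=> Y hY; exists Y; split.
  apply/In_pmap; exists (codeX X); split => //; apply: In_mem; by rewrite mem_enum.
case: (pickP_some hY) => hSY hc.
exists (@mI k); split; first exact: unitary_I.
change (dist2 X (conjt (@mI k) Y) < om); rewrite conjt_I; apply: dist_small => t.
have e : q (entryf X t) = q (entryf Y t).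
  have := congr1 (fun f : {ffun T -> 'I_M.+1} => nat_of_ord (f t)) hc; rewrite /codeX !ffunE /=.
  rewrite !inordK; [by move=> ->| |]; apply: q_bound; exact: hS.
by apply: q_close => //; apply: hS.
Qed.
End Cover.

Lemma ERle_refl a : ERle a a.
Proof. case: a => //= r; lra. Qed.
Lemma ERle_trans a b c : ERle a b -> ERle b c -> ERle a c.
Proof. case: a; case: b; case: c => //= *; lra. Qed.

Definition sup_prop (E : ER -> Prop) s :=
  (forall z, E z -> ERle z s) /\ (forall s', (forall z, E z -> ERle z s') -> ERle s s').

Lemma sup_exists (E : ER -> Prop) : exists s, sup_prop E s.
Proof.
case: (classic (E ERpinf \/ forall m, exists r, E (ERfin r) /\ m < r)) => [h|h].
  exists ERpinf; split; first by case.
  move=> s' hs'; case: s' hs' => //= [m|] hs'; case: h => [hp|hu].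
  - exact: hs' _ hp.
  - case: (hu m) => r [hr hlt]; have := hs' _ hr; simpl; lra.
  - exact: hs' _ hp.
  - case: (hu 0) => r [hr _]; exact: hs' _ hr.
have hnp : ~ E ERpinf by move=> hp; apply: h; left.
have [m hm] : exists m, forall r, E (ERfin r) -> r <= m.
  apply: NNPP => hn; apply: h; right => m; apply: NNPP => hm; apply: hn; exists m.
  move=> r hr; apply: Rnot_lt_le => hlt; apply: hm; by exists r.
case: (classic (exists r, E (ERfin r))) => [[r0 hr0]|hno].
  have [l hl] : {l | is_lub (fun r => E (ERfin r)) l}.
    apply: completeness; [by exists m | by exists r0].
  exists (ERfin l); split.
    case=> [r hr|hp|_] //=; exact: (proj1 hl) _ hr.
  case=> [m'|//|] hs' /=.
  - apply: (proj2 hl) => r hr; exact: hs' _ hr.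
  - exact: hs' _ hr0.
exists ERminf; split => //.
case=> [r hr|hp|//]; [case: hno; by exists r | exact: hnp hp].
Qed.

Lemma Esup_spec E : sup_prop E (Esup E).
Proof. rewrite /Esup; apply: epsilon_spec; exact: sup_exists. Qed.

Lemma Esup_ub E z : E z -> ERle z (Esup E).
Proof. exact: (proj1 (Esup_spec E)). Qed.
Lemma Esup_least E s : (forall z, E z -> ERle z s) -> ERle (Esup E) s.
Proof. exact: (proj2 (Esup_spec E)). Qed.

Definition inf_prop (E : ER -> Prop) s :=
  (forall z, E z -> ERle s z) /\ (forall s', (forall z, E z -> ERle s' z) -> ERle s' s).

Lemma Einf_spec E : inf_prop E (Einf E).
Proof.
rewrite /Einf; apply: epsilon_spec.
exists (Esup (fun s => forall z, E z -> ERle s z)); split.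
  move=> z hz; apply: Esup_least => s hs; exact: hs.
move=> s' hs'; apply: Esup_ub; exact: hs'.
Qed.
Lemma Einf_lb E z : E z -> ERle (Einf E) z.
Proof. exact: (proj1 (Einf_spec E)). Qed.
Lemma Einf_great E s : (forall z, E z -> ERle s z) -> ERle s (Einf E).
Proof. exact: (proj2 (Einf_spec E)). Qed.

Lemma Elimsup_mono (u v : nat -> ER) :
  (forall k, (1 <= k)%N -> ERle (u k) (v k)) -> ERle (Elimsup u) (Elimsup v).
Proof.
move=> h; rewrite /Elimsup; apply: Einf_great => z [N ->].
apply: (@ERle_trans _ (Esup (fun w => exists k, (N.+1 <= k)%N /\ w = u k))).
  apply: Einf_lb; by exists N.+1.
apply: Esup_least => w [k [hk ->]].
apply: ERle_trans (h k _) _; first by apply: leq_trans hk.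
apply: Esup_ub; exists k; split => //; exact: ltnW.
Qed.

Section Alg.
Variable A : CstarAlg.
Implicit Types x y z u v w : A.

Definition sub x y := ca_add x (ca_opp y).
Definition Cm1 := Copp C1.

Lemma addA x y z : ca_add x (ca_add y z) = ca_add (ca_add x y) z. Proof. exact: ca_addA. Qed.
Lemma addC x y : ca_add x y = ca_add y x. Proof. exact: ca_addC. Qed.
Lemma add0 x : ca_add ca_zero x = x. Proof. exact: ca_add0. Qed.
Lemma addr0 x : ca_add x ca_zero = x. Proof. by rewrite addC add0. Qed.
Lemma addN x : ca_add x (ca_opp x) = ca_zero. Proof. exact: ca_addN. Qed.
Lemma addNl x : ca_add (ca_opp x) x = ca_zero. Proof. by rewrite addC addN. Qed.
Lemma addCA x y z : ca_add x (ca_add y z) = ca_add y (ca_add x z).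
Proof. by rewrite !addA (addC x). Qed.

Lemma norm_smul0 x : ca_norm (ca_smul C0 x) = 0.
Proof. by rewrite ca_normZ Cabs_C0 Rmult_0_l. Qed.
Lemma smul0 x : ca_smul C0 x = ca_zero.
Proof. apply: ca_norm_eq0; exact: norm_smul0. Qed.
Lemma norm0 : ca_norm (ca_zero : A) = 0.
Proof. by rewrite -(smul0 ca_zero) norm_smul0. Qed.
Lemma smulx0 a : ca_smul a (ca_zero : A) = ca_zero.
Proof. by rewrite -(smul0 ca_zero) ca_smulA Cmul0r smul0. Qed.

Lemma oppE x : ca_opp x = ca_smul Cm1 x.
Proof.
have h : ca_add (ca_smul Cm1 x) x = ca_zero.
  rewrite -{2}(ca_smul1 x) -ca_smulDl.
  have -> : Cadd Cm1 C1 = C0 by apply: C_ext => /=; ring.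
  exact: smul0.
by rewrite -(add0 (ca_opp x)) -h -addA addN addr0.
Qed.
Lemma Cabs_m1 : Cabs Cm1 = 1. Proof. by rewrite /Cm1 Cabs_opp Cabs_C1. Qed.
Lemma norm_opp x : ca_norm (ca_opp x) = ca_norm x.
Proof. by rewrite oppE ca_normZ Cabs_m1 Rmult_1_l. Qed.
Lemma norm_ge0 x : 0 <= ca_norm x.
Proof.
have := ca_normD x (ca_opp x); rewrite addN norm0 norm_opp; lra.
Qed.
Lemma opp_add x y : ca_opp (ca_add x y) = ca_add (ca_opp x) (ca_opp y).
Proof. by rewrite !oppE ca_smulDr. Qed.
Lemma opp_opp x : ca_opp (ca_opp x) = x.
Proof.
rewrite !oppE ca_smulA.
have -> : Cmul Cm1 Cm1 = C1 by apply: C_ext => /=; ring.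
exact: ca_smul1.
Qed.
Lemma mul_opp_l x y : ca_mul (ca_opp x) y = ca_opp (ca_mul x y).
Proof. by rewrite !oppE ca_smul_mull. Qed.
Lemma mul_opp_r x y : ca_mul x (ca_opp y) = ca_opp (ca_mul x y).
Proof. by rewrite !oppE ca_smul_mulr. Qed.
Lemma smul_opp a x : ca_smul a (ca_opp x) = ca_opp (ca_smul a x).
Proof. by rewrite !oppE !ca_smulA CmulC. Qed.
Lemma star_opp x : ca_star (ca_opp x) = ca_opp (ca_star x).
Proof.
rewrite !oppE ca_starZ; congr ca_smul; apply: C_ext; rewrite /Cm1 /=; ring.
Qed.
Lemma mul0r x : ca_mul ca_zero x = (ca_zero : A).
Proof. by rewrite -{1}(smul0 ca_zero) ca_smul_mull !smul0. Qed.
Lemma star_one : ca_star (ca_one : A) = ca_one.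
Proof.
set u := ca_star ca_one.
have h : ca_star u = ca_one by rewrite /u ca_starK.
have h2 : ca_star (ca_mul u ca_one) = ca_mul u ca_one by rewrite ca_starM h ca_mul1r.
rewrite ca_mul1r h in h2; by rewrite -h2.
Qed.

Lemma subE x y : sub x y = ca_add x (ca_opp y). Proof. by []. Qed.
Lemma sub_tri_id x y z : ca_add (sub x y) (sub y z) = sub x z.
Proof. by rewrite /sub -addA (addA (ca_opp y)) addNl add0. Qed.
Lemma sub_add_id x y : ca_add (sub x y) y = x.
Proof. by rewrite /sub -addA addNl addr0. Qed.
Lemma sub_swap x y : sub y x = ca_opp (sub x y).
Proof. by rewrite /sub opp_add opp_opp addC. Qed.
Lemma sub_addD x y u v : sub (ca_add x y) (ca_add u v) = ca_add (sub x u) (sub y v).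
Proof. by rewrite /sub opp_add -!addA (addCA y). Qed.
Lemma sub_mulD x y u v :
  sub (ca_mul x y) (ca_mul u v) = ca_add (ca_mul (sub x u) y) (ca_mul u (sub y v)).
Proof.
rewrite /sub ca_mulDl ca_mulDr mul_opp_l mul_opp_r -addA (addA (ca_opp _)) addNl add0 //.
Qed.

Lemma norm_sub_sym x y : ca_norm (sub x y) = ca_norm (sub y x).
Proof. by rewrite sub_swap norm_opp. Qed.
Lemma norm_tri x y z : ca_norm (sub x z) <= ca_norm (sub x y) + ca_norm (sub y z).
Proof. rewrite -(sub_tri_id x y z); exact: ca_normD. Qed.
Lemma norm_le_sub x y : ca_norm x <= ca_norm (sub x y) + ca_norm y.
Proof. rewrite -{1}(sub_add_id x y); exact: ca_normD. Qed.
Lemma norm_diff x y : Rabs (ca_norm x - ca_norm y) <= ca_norm (sub x y).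
Proof.
have h1 := norm_le_sub x y; have h2 := norm_le_sub y x.
rewrite norm_sub_sym in h2; apply: Rabs_le; lra.
Qed.
Lemma norm_subD x y u v : ca_norm (sub (ca_add x y) (ca_add u v)) <= ca_norm (sub x u) + ca_norm (sub y v).
Proof. rewrite sub_addD; exact: ca_normD. Qed.
Lemma norm_subM x y u v :
  ca_norm (sub (ca_mul x y) (ca_mul u v)) <= ca_norm (sub x u) * ca_norm y + ca_norm u * ca_norm (sub y v).
Proof.
rewrite sub_mulD; apply: Rle_trans (ca_normD _ _) _.
have := ca_normM (sub x u) y; have := ca_normM u (sub y v); lra.
Qed.
Lemma norm_star x : ca_norm (ca_star x) = ca_norm x.
Proof.
have le : forall w : A, ca_norm w <= ca_norm (ca_star w).
  move=> w; have h := ca_cstar w; have h2 := ca_normM (ca_star w) w.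
  have := norm_ge0 w; have := norm_ge0 (ca_star w); nra.
apply: Rle_antisym; last exact: le.
by have := le (ca_star x); rewrite ca_starK.
Qed.
Lemma star_sub x y : ca_star (sub x y) = sub (ca_star x) (ca_star y).
Proof. by rewrite /sub ca_starD star_opp. Qed.
End Alg.

Lemma Q2R0 : Q2R 0 = 0. Proof. rewrite /Q2R /=; field. Qed.
Lemma Q2R1 : Q2R 1 = 1. Proof. rewrite /Q2R /=; field. Qed.
Lemma CofQ00 : CofQ 0 0 = C0. Proof. by apply: C_ext; rewrite /= Q2R0. Qed.
Lemma CofQ10 : CofQ 1 0 = C1. Proof. by apply: C_ext; rewrite /= ?Q2R0 ?Q2R1. Qed.
Lemma CofQ_add a b c d : CofQ (a + c) (b + d) = Cadd (CofQ a b) (CofQ c d).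
Proof. by apply: C_ext; rewrite /= Q2R_plus. Qed.
Lemma CofQ_mul a b c d :
  CofQ (a * c - b * d) (a * d + b * c) = Cmul (CofQ a b) (CofQ c d).
Proof. by apply: C_ext; rewrite /= ?Q2R_minus ?Q2R_plus !Q2R_mult. Qed.
Lemma CofQ_conj a b : CofQ a (- b) = Cconj (CofQ a b).
Proof. by apply: C_ext; rewrite /= ?Q2R_opp. Qed.
Lemma CofQ_eq a b a' b' : Qeq a a' -> Qeq b b' -> CofQ a b = CofQ a' b'.
Proof. by move=> h1 h2; apply: C_ext; rewrite /=; apply: Qeq_eqR. Qed.

Fixpoint pren (V W : Type) (f : V -> W) (p : ncpoly V) : ncpoly W :=
  match p with
  | PC a b => PC a b
  | PV v => PV (f v)
  | PAdd p q => PAdd (pren f p) (pren f q)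
  | PMul p q => PMul (pren f p) (pren f q)
  end.
Fixpoint pbind (V W : Type) (s : V -> ncpoly W) (p : ncpoly V) : ncpoly W :=
  match p with
  | PC a b => PC a b
  | PV v => s v
  | PAdd p q => PAdd (pbind s p) (pbind s q)
  | PMul p q => PMul (pbind s p) (pbind s q)
  end.
Fixpoint pstar (V : Type) (p : ncpoly V) : ncpoly V :=
  match p with
  | PC a b => PC a (- b)%Q
  | PV v => PV v
  | PAdd p q => PAdd (pstar p) (pstar q)
  | PMul p q => PMul (pstar q) (pstar p)
  end.

Lemma evalM_ren k V W (f : V -> W) (X : W -> Mat k) p :
  evalM X (pren f p) = evalM (fun v => X (f v)) p.
Proof. by elim: p => //= p IHp q IHq; rewrite IHp IHq. Qed.
Lemma evalA_ren (A : CstarAlg) V W (f : V -> W) (X : W -> A) p :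
  evalA X (pren f p) = evalA (fun v => X (f v)) p.
Proof. by elim: p => //= p IHp q IHq; rewrite IHp IHq. Qed.
Lemma evalM_bind k V W (s : V -> ncpoly W) (X : W -> Mat k) p :
  evalM X (pbind s p) = evalM (fun v => evalM X (s v)) p.
Proof. by elim: p => //= p IHp q IHq; rewrite IHp IHq. Qed.
Lemma evalA_bind (A : CstarAlg) V W (s : V -> ncpoly W) (X : W -> A) p :
  evalA X (pbind s p) = evalA (fun v => evalA X (s v)) p.
Proof. by elim: p => //= p IHp q IHq; rewrite IHp IHq. Qed.

Lemma evalM_polyeq k V (X : V -> Mat k) p q : polyeq p q -> evalM X p = evalM X q.
Proof.
elim=> {p q} /=; try congruence.
- by move=> *; apply: maddA.
- by move=> *; apply: maddC.
- by move=> p; rewrite CofQ00 msmul0 madd0l.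
- by move=> *; apply: mmulA.
- by move=> p; rewrite CofQ10 msmul_I_mul; apply: mat_ext => i j; apply: Cmul1l.
- by move=> p; rewrite CofQ10 mI_msmul_mul; apply: mat_ext => i j; apply: Cmul1l.
- by move=> p; rewrite CofQ00 msmul_I_mul !msmul0.
- by move=> *; apply: mmulDl.
- by move=> *; apply: mmulDr.
- by move=> a b p; rewrite msmul_I_mul mI_msmul_mul.
- by move=> a b c d; rewrite CofQ_add msmulDl.
- by move=> a b c d; rewrite msmul_I_mul msmulA CofQ_mul.
- by move=> a b a' b' h1 h2; rewrite (CofQ_eq h1 h2).
Qed.

Lemma evalA_polyeq (A : CstarAlg) V (X : V -> A) p q : polyeq p q -> evalA X p = evalA X q.
Proof.
elim=> {p q} /=; try congruence.
- by move=> *; apply: ca_addA.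
- by move=> *; apply: ca_addC.
- by move=> p; rewrite CofQ00 smul0 add0.
- by move=> *; apply: ca_mulA.
- by move=> p; rewrite CofQ10 ca_smul1 ca_mul1l.
- by move=> p; rewrite CofQ10 ca_smul1 ca_mul1r.
- by move=> p; rewrite CofQ00 smul0 mul0r.
- by move=> *; apply: ca_mulDl.
- by move=> *; apply: ca_mulDr.
- by move=> a b p; rewrite ca_smul_mull ca_smul_mulr ca_mul1l ca_mul1r.
- by move=> a b c d; rewrite CofQ_add ca_smulDl.
- by move=> a b c d; rewrite ca_smul_mull ca_mul1l ca_smulA CofQ_mul.
- by move=> a b a' b' h1 h2; rewrite (CofQ_eq h1 h2).
Qed.

Lemma evalM_star k V (X : V -> Mat k) p : (forall v, msa (X v)) ->
  evalM X (pstar p) = madj (evalM X p).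
Proof.
move=> hX; elim: p => /=.
- by move=> a b; rewrite madj_smul madj_I CofQ_conj.
- by move=> v; apply: mat_ext => i j; rewrite /madj hX.
- by move=> p IHp q IHq; rewrite madj_add IHp IHq.
- by move=> p IHp q IHq; rewrite madj_mul IHp IHq.
Qed.
Lemma evalA_star (A : CstarAlg) V (X : V -> A) p : (forall v, ca_star (X v) = X v) ->
  evalA X (pstar p) = ca_star (evalA X p).
Proof.
move=> hX; elim: p => /=.
- by move=> a b; rewrite ca_starZ star_one CofQ_conj.
- by move=> v; rewrite hX.
- by move=> p IHp q IHq; rewrite ca_starD IHp IHq.
- by move=> p IHp q IHq; rewrite ca_starM IHp IHq.
Qed.

Fixpoint pbnd (V : Type) (n1 K : R) (p : ncpoly V) : R :=
  match p with
  | PC a b => Cabs (CofQ a b) * n1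
  | PV _ => K
  | PAdd p q => pbnd n1 K p + pbnd n1 K q
  | PMul p q => pbnd n1 K p * pbnd n1 K q
  end.
Lemma pbnd_ge0 V n1 K (p : ncpoly V) : 0 <= n1 -> 0 <= K -> 0 <= pbnd n1 K p.
Proof.
move=> h1 hK; elim: p => /=.
- move=> a b; apply: Rmult_le_pos => //; exact: Cabs_ge0.
- done.
- move=> p hp q hq; lra.
- move=> p hp q hq; exact: Rmult_le_pos.
Qed.
Lemma pbnd_mono V n1 K K' (p : ncpoly V) : 0 <= n1 -> 0 <= K -> K <= K' ->
  pbnd n1 K p <= pbnd n1 K' p.
Proof.
move=> h1 hK hKK; elim: p => /=.
- move=> *; lra.
- done.
- move=> p hp q hq; lra.
- move=> p hp q hq; apply: Rmult_le_compat => //; exact: pbnd_ge0.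
Qed.

Lemma evalM_bnd k V (X : V -> Mat k) K p : 0 <= K -> (forall v, mopnorm (X v) <= K) ->
  mopnorm (evalM X p) <= pbnd 1 K p.
Proof.
move=> hK hX; elim: p => /=.
- move=> a b; rewrite Rmult_1_r; exact: mopnorm_sI.
- done.
- move=> p hp q hq; apply: Rle_trans (mopnorm_add _ _) _; lra.
- move=> p hp q hq; apply: Rle_trans (mopnorm_mul _ _) _.
  apply: Rmult_le_compat => //; exact: mopnorm_ge0.
Qed.

Lemma evalA_bnd (A : CstarAlg) V (X : V -> A) K p : 0 <= K -> (forall v, ca_norm (X v) <= K) ->
  ca_norm (evalA X p) <= pbnd (ca_norm (ca_one : A)) K p.
Proof.
move=> hK hX; elim: p => /=.
- move=> a b; rewrite ca_normZ; lra.
- done.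
- move=> p hp q hq; apply: Rle_trans (ca_normD _ _) _; lra.
- move=> p hp q hq; apply: Rle_trans (ca_normM _ _) _.
  apply: Rmult_le_compat => //; exact: norm_ge0.
Qed.

Fixpoint plip (V : Type) (n1 K : R) (p : ncpoly V) : R :=
  match p with
  | PC a b => 0
  | PV _ => 1
  | PAdd p q => plip n1 K p + plip n1 K q
  | PMul p q => plip n1 K p * pbnd n1 K q + pbnd n1 K p * plip n1 K q
  end.
Lemma plip_ge0 V n1 K (p : ncpoly V) : 0 <= n1 -> 0 <= K -> 0 <= plip n1 K p.
Proof.
move=> h1 hK; elim: p => /=; try (move=> *; lra).
move=> p hp q hq; have := pbnd_ge0 p h1 hK; have := pbnd_ge0 q h1 hK.
move=> a b; apply: Rplus_le_le_0_compat; exact: Rmult_le_pos.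
Qed.

Lemma evalA_lip (A : CstarAlg) V (X Y : V -> A) K d p : 0 <= K -> 0 <= d ->
  (forall v, ca_norm (X v) <= K) -> (forall v, ca_norm (Y v) <= K) ->
  (forall v, ca_norm (sub (X v) (Y v)) <= d) ->
  ca_norm (sub (evalA X p) (evalA Y p)) <= plip (ca_norm (ca_one : A)) K p * d.
Proof.
move=> hK hd hX hY hXY; have h1 := norm_ge0 (ca_one : A).
elim: p => /=.
- move=> a b; rewrite /sub addN norm0; lra.
- move=> v; rewrite Rmult_1_l; exact: hXY.
- move=> p hp q hq; apply: Rle_trans (norm_subD _ _ _ _) _; lra.
- move=> p hp q hq; apply: Rle_trans (norm_subM _ _ _ _) _.
  have b1 := evalA_bnd p hK hX; have b2 := evalA_bnd q hK hX.
  have b3 := evalA_bnd p hK hY; have b4 := evalA_bnd q hK hY.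
  have n1 := norm_ge0 (sub (evalA X p) (evalA Y p)); have n2 := norm_ge0 (sub (evalA X q) (evalA Y q)).
  have n3 := norm_ge0 (evalA X q); have n4 := norm_ge0 (evalA Y p).
  have l1 := plip_ge0 p h1 hK; have l2 := plip_ge0 q h1 hK.
  have p1 := pbnd_ge0 p h1 hK; have p2 := pbnd_ge0 q h1 hK.
  have e1 : ca_norm (sub (evalA X p) (evalA Y p)) * ca_norm (evalA X q) <=
            (plip (ca_norm (ca_one : A)) K p * d) * pbnd (ca_norm (ca_one : A)) K q.
    by apply: Rmult_le_compat.
  have e2 : ca_norm (evalA Y p) * ca_norm (sub (evalA X q) (evalA Y q)) <=
            pbnd (ca_norm (ca_one : A)) K p * (plip (ca_norm (ca_one : A)) K q * d).
    by apply: Rmult_le_compat.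
  nra.
Qed.

Lemma sub_smul (A : CstarAlg) a c (u q : A) :
  sub (ca_smul a u) (ca_smul c q) = ca_add (ca_smul a (sub u q)) (ca_smul (Cadd a (Copp c)) q).
Proof.
rewrite /sub ca_smulDr ca_smulDl smul_opp -addA; congr ca_add.
rewrite addA addNl add0 oppE ca_smulA.
congr ca_smul; apply: C_ext; rewrite /Cm1 /=; ring.
Qed.
Lemma norm_sub_smul (A : CstarAlg) a c (u q : A) :
  ca_norm (sub (ca_smul a u) (ca_smul c q)) <= Cabs a * ca_norm (sub u q) + Cabs (Cadd a (Copp c)) * ca_norm q.
Proof. rewrite sub_smul -!ca_normZ; exact: ca_normD. Qed.

Lemma Q_approx r e : 0 < e -> exists t : Q, Rabs (Q2R t - r) < e.
Proof.
move=> he.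
have hu : (0 < up (/ e))%Z.
  apply: lt_IZR; case: (archimed (/ e)) => h1 _; have := Rinv_0_lt_compat _ he; lra.
set m := Z.to_pos (up (/ e)).
have em : IZR (Zpos m) = IZR (up (/ e)) by rewrite /m Z2Pos.id.
exists (Qmake (up (r * IZR (Zpos m))) m).
rewrite /Q2R /= em.
have hm : 0 < IZR (up (/ e)) by apply: IZR_lt; lia.
case: (archimed (r * IZR (up (/ e)))) => a1 a2.
case: (archimed (/ e)) => b1 b2.
rewrite /Q2R /=.
set u := IZR (up (r * IZR (up (/ e)))) in a1 a2 *.
set M := IZR (up (/ e)) in hm a1 a2 b1 b2 *.
have -> : u * / M - r = (u - r * M) / M by field; lra.
rewrite /Rdiv Rabs_mult Rabs_inv (Rabs_right M); last lra.
rewrite Rabs_right; last lra.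
apply: (Rmult_lt_reg_r M) => //.
have -> : (u - r * M) * / M * M = u - r * M by field; lra.
have : 1 < e * M.
  have := Rmult_lt_compat_l e _ _ he b1; rewrite Rinv_r; lra.
lra.
Qed.

Lemma Cabs_le_parts z : Cabs z <= Rabs (Cre z) + Rabs (Cim z).
Proof.
rewrite {1}(_ : z = Cadd (CofR (Cre z)) (mkC 0 (Cim z))); last by apply: C_ext => /=; ring.
apply: Rle_trans (Cabs_add _ _) _; rewrite Cabs_CofR /=.
have -> : Cabs (mkC 0 (Cim z)) = Rabs (Cim z).
  by rewrite /Cabs /Rsqr /= Rmult_0_l Rplus_0_l -sqrt_Rsqr_abs.
rewrite /=; lra.
Qed.

Lemma C_approx a e : 0 < e -> exists t1 t2 : Q, Cabs (Cadd a (Copp (CofQ t1 t2))) < e.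
Proof.
move=> he; have he2 : 0 < e / 2 by lra.
case: (Q_approx (Cre a) he2) => t1 h1; case: (Q_approx (Cim a) he2) => t2 h2.
exists t1, t2; apply: Rle_lt_trans (Cabs_le_parts _) _; rewrite /=.
rewrite -(Rabs_Ropp (Cre a + - Q2R t1)) -(Rabs_Ropp (Cim a + - Q2R t2)).
have -> : - (Cre a + - Q2R t1) = Q2R t1 - Cre a by ring.
have -> : - (Cim a + - Q2R t2) = Q2R t2 - Cim a by ring.
lra.
Qed.

Section Approx.
Variables (A : CstarAlg) (n : nat) (x : 'I_n -> A).
Hypothesis hx : forall i, ca_star (x i) = x i.

Definition approxS (z : A) := forall e, 0 < e -> exists q, ca_norm (sub z (evalA x q)) < e.

Lemma approxS_sub : unital_cstar_subalg approxS.
Proof.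
split; [|split; [|split; [|split; [|split]]]].
- move=> e he; exists (PC 1%Q 0%Q); rewrite /= CofQ10 ca_smul1 /sub addN norm0 //.
- move=> u v hu hv e he; case: (hu (e/2)) => [|q1 h1]; first lra.
  case: (hv (e/2)) => [|q2 h2]; first lra.
  exists (PAdd q1 q2) => /=; apply: Rle_lt_trans (norm_subD _ _ _ _) _; lra.
- move=> a u hu e he.
  set Ku := ca_norm u + 1.
  have hKu : 0 < Ku by have := norm_ge0 u; rewrite /Ku; lra.
  set d1 := Rmin 1 (e / (2 * (Cabs a + 1))).
  have hd1 : 0 < d1 by apply: Rmin_pos; [lra|apply: Rdiv_lt_0_compat; [lra|have := Cabs_ge0 a; lra]].
  case: (hu d1 hd1) => q hq.
  case: (C_approx a (_ : 0 < e / (2 * Ku))) => [|t1 [t2 ht]].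
    apply: Rdiv_lt_0_compat; lra.
  exists (PMul (PC t1 t2) q) => /=; rewrite ca_smul_mull ca_mul1l.
  apply: Rle_lt_trans (norm_sub_smul _ _ _ _) _.
  have hqn : ca_norm (evalA x q) <= Ku.
    have := norm_le_sub (evalA x q) u; rewrite norm_sub_sym.
    have := Rmin_l 1 (e / (2 * (Cabs a + 1))); rewrite -/d1; rewrite /Ku; lra.
  have ha := Cabs_ge0 a.
  have e1 : Cabs a * ca_norm (sub u (evalA x q)) <= Cabs a * d1.
    apply: Rmult_le_compat_l => //; lra.
  have e2 : Cabs a * d1 <= e / 2.
    apply: Rle_trans (Rmult_le_compat_l _ _ _ ha (Rmin_r _ _)) _.
    have -> : Cabs a * (e / (2 * (Cabs a + 1))) = (e / 2) * (Cabs a / (Cabs a + 1)) by field; lra.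
    have : Cabs a / (Cabs a + 1) <= 1.
      apply: (Rmult_le_reg_r (Cabs a + 1)); first lra.
      rewrite /Rdiv Rmult_assoc Rinv_l; lra.
    have : 0 < e / 2 by lra.
    nra.
  have e3 : Cabs (Cadd a (Copp (CofQ t1 t2))) * ca_norm (evalA x q) < e / 2.
    have hc := Cabs_ge0 (Cadd a (Copp (CofQ t1 t2))).
    have hn := norm_ge0 (evalA x q).
    apply: Rle_lt_trans (_ : Cabs (Cadd a (Copp (CofQ t1 t2))) * Ku < e / 2).
      by apply: Rmult_le_compat_l.
    have : e / (2 * Ku) * Ku = e / 2 by field; lra.
    have := Rmult_lt_compat_r Ku _ _ hKu ht. lra.
  lra.
- move=> u v hu hv e he.
  set Kv := ca_norm v + 1; set Ku := ca_norm u + 1.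
  have hKv : 0 < Kv by have := norm_ge0 v; rewrite /Kv; lra.
  have hKu : 0 < Ku by have := norm_ge0 u; rewrite /Ku; lra.
  set d1 := Rmin 1 (e / (2 * Kv)).
  have hd1 : 0 < d1 by apply: Rmin_pos; [lra|apply: Rdiv_lt_0_compat; lra].
  case: (hu d1 hd1) => q1 h1.
  case: (hv (e / (2 * Ku))) => [|q2 h2]; first (apply: Rdiv_lt_0_compat; lra).
  exists (PMul q1 q2) => /=; apply: Rle_lt_trans (norm_subM _ _ _ _) _.
  have hq1 : ca_norm (evalA x q1) <= Ku.
    have := norm_le_sub (evalA x q1) u; rewrite norm_sub_sym.
    have := Rmin_l 1 (e / (2 * Kv)); rewrite -/d1; rewrite /Ku; lra.
  have n1 := norm_ge0 (sub u (evalA x q1)); have n2 := norm_ge0 (sub v (evalA x q2)).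
  have n3 := norm_ge0 v; have n4 := norm_ge0 (evalA x q1).
  have e1 : ca_norm (sub u (evalA x q1)) * ca_norm v <= e / (2 * Kv) * Kv.
    apply: Rmult_le_compat => //; first (have := Rmin_r 1 (e / (2 * Kv)); rewrite -/d1; lra).
    rewrite /Kv; lra.
  have e2 : ca_norm (evalA x q1) * ca_norm (sub v (evalA x q2)) < Ku * (e / (2 * Ku)).
    apply: Rle_lt_trans (_ : Ku * ca_norm (sub v (evalA x q2)) < _).
      by apply: Rmult_le_compat_r.
    by apply: Rmult_lt_compat_l.
  have : e / (2 * Kv) * Kv = e / 2 by field; lra.
  have : Ku * (e / (2 * Ku)) = e / 2 by field; lra.
  lra.
- move=> u hu e he; case: (hu e he) => q hq; exists (pstar q).
  rewrite evalA_star // -star_sub norm_star //.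
- move=> z hz e he; case: (hz (e / 2)) => [|w [hw h1]]; first lra.
  case: (hw (e / 2)) => [|q h2]; first lra.
  exists q; apply: Rle_lt_trans (norm_tri _ w _) _; rewrite /sub in h2 *; lra.
Qed.

Lemma approx_gen z : in_Cstar_gen x z -> approxS z.
Proof.
move=> h; apply: h; first exact: approxS_sub.
move=> i e he; exists (PV i); rewrite /= /sub addN norm0 //.
Qed.
End Approx.

Lemma logcov_mono o1 o2 k : (o1 <= o2)%N -> (1 <= k)%N -> ERle (logcov o1 k) (logcov o2 k).
Proof.
move=> ho hk; case: o1 ho => [|o1] ho; first done.
case: o2 ho => [|o2] ho; first done.
change (ln (INR o1.+1) / Rsqr (INR k) <= ln (INR o2.+1) / Rsqr (INR k)).
have hk0 : k <> 0%nat by move: hk; case: k.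
have hk' : 0 < Rsqr (INR k) by apply: Rlt_0_sqr; apply: not_0_INR.
rewrite /Rdiv; apply: Rmult_le_compat_r; first (left; exact: Rinv_0_lt_compat).
have h1 : 0 < INR o1.+1 by apply: lt_0_INR; apply/ltP.
have h2 : INR o1.+1 <= INR o2.+1 by apply: le_INR; apply/leP; exact: ho.
case: (Rle_lt_or_eq_dec _ _ h2) => h3; [left; exact: ln_increasing | rewrite h3; lra].
Qed.

Lemma fin_bound (T : finType) (P : T -> nat -> Prop) :
  (forall j, exists m, P j m) -> exists R, forall j, exists m, (m <= R)%N /\ P j m.
Proof.
move=> h.
pose f j := proj1_sig (constructive_indefinite_description _ (h j)).
exists (\max_(j : T) f j) => j; exists (f j); split.
  exact: (@leq_bigmax _ (fun j => f j) j).
exact: (proj2_sig (constructive_indefinite_description _ (h j))).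
Qed.

Lemma comp_le z b : Rabs (comp z b) <= Cabs z.
Proof. case: b; [exact: Cre_le | exact: Cim_le]. Qed.

Lemma entry_bound n k (As : 'I_n -> Mat k) Rb :
  (forall i, mopnorm (As i) <= Rb) -> forall t, Rabs (entryf As t) <= Rb.
Proof.
move=> h t; rewrite /entryf; apply: Rle_trans (comp_le _ _) _.
apply: Rle_trans (mopnorm_entry _ _ _) _; exact: h.
Qed.

Definition Qsa (V : Type) (q : ncpoly V) : ncpoly V :=
  PMul (PC (1#2)%Q 0%Q) (PAdd q (pstar q)).
Definition hC := CofQ (1#2)%Q 0%Q.
Lemma hC_re : Cre hC = / 2. Proof. rewrite /hC /= /Q2R /=; field. Qed.
Lemma hC_im : Cim hC = 0. Proof. rewrite /hC /=; exact: Q2R0. Qed.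
Lemma hC_add : Cadd hC hC = C1.
Proof. apply: C_ext. change (Cre hC + Cre hC = 1); rewrite hC_re; field. change (Cim hC + Cim hC = 0); rewrite hC_im; ring. Qed.
Lemma hC_abs : Cabs hC = / 2.
Proof.
rewrite /Cabs hC_re hC_im /Rsqr Rmult_0_l Rplus_0_r -/(Rsqr (/2)) sqrt_Rsqr //.
left; apply: Rinv_0_lt_compat; lra.
Qed.
Lemma hC_conj : Cconj hC = hC.
Proof. apply: C_ext. by []. change (- Cim hC = Cim hC); rewrite hC_im; ring. Qed.

Lemma msa_of k (M : Mat k) : madj M = M -> msa M.
Proof. move=> h i j; by rewrite -{1}h. Qed.

Lemma Qsa_msa k V (As : V -> Mat k) q : (forall v, msa (As v)) -> msa (evalM As (Qsa q)).
Proof.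
move=> hsa; apply: msa_of; rewrite /Qsa /= evalM_star // msmul_I_mul.
rewrite madj_smul madj_add madjK hC_conj -/hC; congr msmul; exact: maddC.
Qed.

Lemma smul_sub_same (A : CstarAlg) a (u v : A) : sub (ca_smul a u) (ca_smul a v) = ca_smul a (sub u v).
Proof.
rewrite sub_smul.
have -> : Cadd a (Copp a) = C0 by apply: C_ext => /=; ring.
by rewrite smul0 addr0.
Qed.

Lemma sa_approx (A : CstarAlg) n (x : 'I_n -> A) (hx : forall i, ca_star (x i) = x i)
  (yv : A) (hy : ca_star yv = yv) q d :
  ca_norm (sub yv (evalA x q)) < d -> ca_norm (sub yv (evalA x (Qsa q))) < d.
Proof.
move=> h.
have ey : yv = ca_smul hC (ca_add yv (ca_star yv)).
  by rewrite hy ca_smulDr -ca_smulDl hC_add ca_smul1.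
rewrite /Qsa /= ca_smul_mull ca_mul1l evalA_star // -/hC.
rewrite {1}ey smul_sub_same ca_normZ hC_abs.
have := norm_subD yv (ca_star yv) (evalA x q) (ca_star (evalA x q)).
rewrite -star_sub norm_star; have := norm_ge0 (sub (ca_add yv (ca_star yv)) (ca_add (evalA x q) (ca_star (evalA x q)))).
lra.
Qed.

Section Main.
Variables (A : CstarAlg) (n p : nat) (x : 'I_n -> A) (y : 'I_p -> A)
    (PX : nat -> ncpoly 'I_n) (PXY : nat -> ncpoly ('I_n + 'I_p)%type).
Hypothesis hX : enumerates_all PX.
Hypothesis hXY : enumerates_all PXY.

Lemma part2 omega : 0 < omega ->
  ERle (KtopXY x y PXY (2 * omega)) (KtopX x PX omega).
Proof.
move=> hom.
rewrite /KtopXY; apply: Esup_least => z [Rb [hRb ->]].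
apply: ERle_trans; last first.
  apply: Esup_ub; exists Rb; split; [exact: hRb | reflexivity].
apply: Einf_great => w [eps [r [heps [hr ->]]]].
have hfb : forall j : 'I_r.+1, exists m,
    (1 <= j)%N -> (1 <= m)%N /\ polyeq (PXY m) (pren inl (PX j)).
  move=> j; case: (hXY (pren inl (PX j))) => m [h1 h2]; by exists m.
have [R hR] := fin_bound hfb.
set r' := maxn R 1.
apply: ERle_trans (Einf_lb (z := Elimsup (fun k => logcov (o2 (GammaXY x y PXY Rb k eps r') (2 * omega)) k)) _) _.
  exists eps, r'; split => //; split; [exact: leq_maxr | done].
apply: Elimsup_mono => k hk; apply: logcov_mono => //.
apply: o2_sub; last first.
  apply: (cover_exists (Rb := Rb)); first lra.
  move=> As [_ [hb _]]; exact: entry_bound.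
move=> As [hsa [Bs [hBsa [hA [hB hcond]]]]]; split => //; split => // j /andP [hj1 hjr].
have hjr' : (j < r.+1)%N by rewrite ltnS.
case: (hR (inord j)) => m [hmR hm].
case: hm; first by rewrite inordK.
rewrite inordK // => hm1 hpe.
have := hcond m _.
rewrite (evalM_polyeq _ hpe) (evalA_polyeq _ hpe) evalM_ren evalA_ren.
apply; apply/andP; split => //; apply: leq_trans hmR _; exact: leq_maxl.
Qed.

Hypothesis hx : forall i, ca_star (x i) = x i.
Hypothesis hy : forall j, ca_star (y j) = y j.
Hypothesis hgen : forall j, in_Cstar_gen x (y j).

Lemma part1 omega : 0 < omega ->
  ERle (KtopX x PX (4 * omega)) (KtopXY x y PXY (2 * omega)).
Proof.
move=> hom.
rewrite /KtopX; apply: Esup_least => z [Rb [hRb ->]].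
set Sy := FS (fun j : 'I_p => ca_norm (y j)).
have hSy : 0 <= Sy by apply: FS_nonneg => j; exact: norm_ge0.
have hyS : forall j, ca_norm (y j) <= Sy.
  move=> j; apply: (@FS_term _ (fun j => ca_norm (y j))) => i; exact: norm_ge0.
set Rb' := Rb + Sy + 2.
apply: ERle_trans; last first.
  apply: Esup_ub; exists Rb'; split; [rewrite /Rb'; lra | reflexivity].
apply: Einf_great => w [eps [r [heps [hr ->]]]].
set n1 := ca_norm (ca_one : A).
have hn1 : 0 <= n1 by exact: norm_ge0.
set Sx := FS (fun i : 'I_n => ca_norm (x i)).
have hSx : 0 <= Sx by apply: FS_nonneg => j; exact: norm_ge0.
have hxS : forall i, ca_norm (x i) <= Sx.
  move=> i; apply: (@FS_term _ (fun i => ca_norm (x i))) => j; exact: norm_ge0.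
set K := Sx + Sy + 1.
have hK : 0 <= K by rewrite /K; lra.
set L := FS (fun j : 'I_r.+1 => plip n1 K (PXY j)).
have hL : 0 <= L by apply: FS_nonneg => j; exact: plip_ge0.
have hLj : forall j : 'I_r.+1, plip n1 K (PXY j) <= L.
  move=> j; apply: (@FS_term _ (fun j : 'I_r.+1 => plip n1 K (PXY j))) => i; exact: plip_ge0.
set del := Rmin 1 (eps / (2 * (L + 1))).
have hdel : 0 < del by apply: Rmin_pos; [lra | apply: Rdiv_lt_0_compat; lra].
have hdel1 : del <= 1 by exact: Rmin_l.
have hLdel : L * del <= eps / 2.
  apply: Rle_trans (Rmult_le_compat_l _ _ _ hL (Rmin_r _ _)) _.
  have -> : L * (eps / (2 * (L + 1))) = (eps / 2) * (L / (L + 1)) by field; lra.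
  have : L / (L + 1) <= 1.
    apply: (Rmult_le_reg_r (L + 1)); first lra.
    rewrite /Rdiv Rmult_assoc Rinv_l; lra.
  have : 0 < eps / 2 by lra.
  nra.
have happ : forall j : 'I_p, exists q, ca_norm (sub (y j) (evalA x q)) < del.
  move=> j; exact: (approx_gen hx (hgen j) hdel).
pose qf j := proj1_sig (constructive_indefinite_description _ (happ j)).
pose Qs j := Qsa (qf j).
have hQs : forall j, ca_norm (sub (y j) (evalA x (Qs j))) < del.
  move=> j; apply: sa_approx => //.
  exact: (proj2_sig (constructive_indefinite_description _ (happ j))).
pose sg : 'I_n + 'I_p -> ncpoly 'I_n := fun v => match v with inl i => PV i | inr j => Qs j end.
have hfb1 : forall j : 'I_p, exists m, (1 <= m)%N /\ polyeq (PX m) (Qs j).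
  move=> j; case: (hX (Qs j)) => m [h1 h2]; by exists m.
have hfb2 : forall j : 'I_r.+1, exists m, (1 <= m)%N /\ polyeq (PX m) (pbind sg (PXY j)).
  move=> j; case: (hX (pbind sg (PXY j))) => m [h1 h2]; by exists m.
have [R1 hR1] := fin_bound hfb1.
have [R2 hR2] := fin_bound hfb2.
set r' := maxn (maxn R1 R2) 1.
set eps' := Rmin (eps / 2) 1.
have heps' : 0 < eps' by apply: Rmin_pos; lra.
have heps'1 : eps' <= 1 by exact: Rmin_r.
have heps'2 : eps' <= eps / 2 by exact: Rmin_l.
apply: ERle_trans (Einf_lb (z := Elimsup (fun k => logcov (o2 (GammaX x PX Rb k eps' r') (4 * omega)) k)) _) _.
  exists eps', r'; split => //; split; [exact: leq_maxr | done].
apply: Elimsup_mono => k hk; apply: logcov_mono => //.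
rewrite (_ : 4 * omega = 2 * (2 * omega)); last ring.
apply: o2_sub; last first.
  apply: (cover_exists (Rb := Rb')); first lra.
  move=> As [_ [Bs [_ [hb _]]]]; exact: entry_bound.
have hr'1 : forall m, (m <= R1)%N -> (m <= r')%N.
  move=> m h; apply: leq_trans h _; apply: leq_trans (leq_maxl _ R2) _; exact: leq_maxl.
have hr'2 : forall m, (m <= R2)%N -> (m <= r')%N.
  move=> m h; apply: leq_trans h _; apply: leq_trans (leq_maxr R1 _) _; exact: leq_maxl.
move=> As [hsa [hA hcond]].
pose Bs j := evalM As (Qs j).
split => //; exists Bs; split; first by move=> j; exact: Qsa_msa.
split; first by move=> i; have := hA i; rewrite /Rb'; lra.
split.
  move=> j; case: (hR1 j) => m [hmR [hm1 hpe]].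
  have hmr : (0 < m <= r')%N by apply/andP; split => //; exact: hr'1.
  have := hcond m hmr; rewrite (evalM_polyeq _ hpe) (evalA_polyeq _ hpe).
  move=> /Rabs_le_bw hb.
  have := norm_le_sub (evalA x (Qs j)) (y j); rewrite norm_sub_sym.
  have := hQs j; have := hyS j; rewrite /Bs /Rb'; lra.
move=> j /andP [hj1 hjr].
have hjr' : (j < r.+1)%N by rewrite ltnS.
case: (hR2 (inord j)) => m [hmR [hm1 hpe]].
rewrite inordK // in hpe.
have hmr : (0 < m <= r')%N by apply/andP; split => //; exact: hr'2.
have hc := hcond m hmr.
rewrite (evalM_polyeq _ hpe) (evalA_polyeq _ hpe) evalM_bind evalA_bind in hc.
have e1 : (fun v => evalM As (sg v)) = join As Bs.
  by apply: functional_extensionality => -[i|i].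
rewrite e1 in hc.
set yq := fun j => evalA x (Qs j).
have e2 : (fun v => evalA x (sg v)) = join x yq.
  by apply: functional_extensionality => -[i|i].
rewrite e2 in hc.
have hlip := @evalA_lip A _ (join x yq) (join x y) K del (PXY j) hK (Rlt_le _ _ hdel).
have hlip' : ca_norm (sub (evalA (join x yq) (PXY j)) (evalA (join x y) (PXY j))) <= plip n1 K (PXY j) * del.
  apply: hlip.
  - move=> [i|i] /=; first by have := hxS i; rewrite /K; lra.
    have := norm_le_sub (yq i) (y i); rewrite norm_sub_sym.
    have := hQs i; have := hyS i; rewrite /yq /K; lra.
  - move=> [i|i] /=; first by have := hxS i; rewrite /K; lra.
    have := hyS i; rewrite /K; lra.
  - move=> [i|i] /=; first by rewrite /sub addN norm0; lra.
    rewrite norm_sub_sym; have := hQs i; rewrite /yq; lra.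
have hPL : plip n1 K (PXY j) <= L.
  by have := hLj (inord j); rewrite inordK.
have hd2 := norm_diff (evalA (join x yq) (PXY j)) (evalA (join x y) (PXY j)).
have : plip n1 K (PXY j) * del <= L * del by apply: Rmult_le_compat_r; lra.
move: hc hd2 hlip'.
set a := mopnorm _; set b := ca_norm (evalA (join x yq) _); set c := ca_norm (evalA (join x y) _).
move=> hc hd2 hlip' hh.
have := Rabs_triang (a - b) (b - c).
have -> : a - b + (b - c) = a - c by ring.
lra.
Qed.
End Main.

Unset Implicit Arguments.
Theorem lemma3p2 (A : CstarAlg) (n p : nat) (x : 'I_n -> A) (y : 'I_p -> A)
    (PX : nat -> ncpoly 'I_n) (PXY : nat -> ncpoly ('I_n + 'I_p)%type) :
  (forall i, ca_star (x i) = x i) ->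
  (forall j, ca_star (y j) = y j) ->
  (forall j, in_Cstar_gen x (y j)) ->
  enumerates_all PX -> enumerates_all PXY ->
  forall omega : R, 0 < omega ->
    ERle (KtopX x PX (4 * omega)) (KtopXY x y PXY (2 * omega)) /\
    ERle (KtopXY x y PXY (2 * omega)) (KtopX x PX omega).
Proof.
move=> hx hy hgen hPX hPXY omega hom; split.
- by apply: part1.
- by apply: part2.
Qed.
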